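(* Let $N\geq 10^{100000}$ be a real number and $f_N(x)=\dfrac{\log N+\log(x-1)}{\log x}$ for real $x>1$. Let $M\geq 10^5$ and $\delta=1/(N\log M)$. Then for each $k=1,\ldots,6$, $$R(f_N,M,\delta)\leq C_k\,(\log N)^{2/(k^2+k)}\,M^{1-2/(k+1)},$$ where $C_1=0.03022$, $C_2=1.04272$, $C_3=3.49005$, $C_4=6.49141$, $C_5=9.57310$, $C_6=12.5825$.
   Context: For a real function $f$ and positive reals $M,\delta$, $R(f,M,\delta)$ is the number of integers $x\in[M,2M]$ such that $\|f(x)\|<\delta$, where $\|t\|$ denotes the distance from the real number $t$ to the nearest integer. $\log$ is the natural logarithm. *)

(* Defs.v *)
From Stdlib Require Import Reals Lra Lia ZArith List.
Open Scope R_scope.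

Definition dist_int (t : R) : R :=
  Rmin (t - IZR (Int_part t)) (IZR (Int_part t) + 1 - t).

Definition Zrange (lo hi : Z) : list Z :=
  map (fun i => (lo + Z.of_nat i)%Z) (seq 0 (Z.to_nat (hi - lo + 1))).

Definition Rcount (f : R -> R) (M delta : R) : nat :=
  length (filter (fun x : Z =>
             if Rlt_dec (IZR x) M then false
             else if Rlt_dec (2 * M) (IZR x) then false
             else if Rlt_dec (dist_int (f (IZR x))) delta then true else false)
          (Zrange (up M - 1) (up (2 * M)))).

Definition fN (N x : R) : R := (ln N + ln (x - 1)) / ln x.

Definition Ck (k : nat) : R :=
  match k with
  | 1 => 3022 / 100000
  | 2 => 104272 / 100000
  | 3 => 349005 / 100000
  | 4 => 649141 / 100000
  | 5 => 957310 / 100000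
  | 6 => 125825 / 10000
  | _ => 0
  end.

(* Main.v *)
Require Import Defs.
From Stdlib Require Import Reals Lra Lia List Sorted ZArith Factorial FunctionalExtensionality ClassicalChoice Bool.
From Coquelicot Require Import Coquelicot.
Open Scope R_scope.

Fixpoint prodR (n:nat) (F: nat -> R) : R :=
  match n with O => 1 | S n => prodR n F * F n end.
Fixpoint sumR (n:nat) (F: nat -> R) : R :=
  match n with O => 0 | S n => sumR n F + F n end.

Lemma prodR_ext n F G : (forall j, (j < n)%nat -> F j = G j) -> prodR n F = prodR n G.
Proof. induction n; simpl; intros H; auto. rewrite IHn, H; auto. Qed.
Lemma sumR_ext n F G : (forall j, (j < n)%nat -> F j = G j) -> sumR n F = sumR n G.
Proof. induction n; simpl; intros H; auto. rewrite IHn, H; auto. Qed.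
Lemma prodR_zero n F j : (j < n)%nat -> F j = 0 -> prodR n F = 0.
Proof. induction n; simpl; intros Hj H0. lia.
  destruct (Nat.eq_dec j n). subst; rewrite H0; ring. rewrite IHn; try lia; auto; ring. Qed.
Lemma prodR_nz n F : (forall j, (j < n)%nat -> F j <> 0) -> prodR n F <> 0.
Proof. induction n; simpl; intros H. lra. apply Rmult_integral_contrapositive; split; auto. Qed.
Lemma sumR_single n F l : (l < n)%nat -> (forall j, (j < n)%nat -> j <> l -> F j = 0) -> sumR n F = F l.
Proof. induction n; simpl; intros Hl H. lia.
  destruct (Nat.eq_dec l n). subst. rewrite (sumR_ext _ _ (fun _ => 0)).
  2:{ intros; apply H; lia. } clear. assert (Z0: sumR n (fun _ => 0) = 0). induction n; simpl; auto. rewrite IHn; ring. rewrite Z0; ring.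
  rewrite IHn. rewrite (H n); auto; ring. lia. intros; apply H; auto; lia. Qed.

Lemma exR_plus (f g : R -> R) x : ex_derive f x -> ex_derive g x -> ex_derive (fun y => f y + g y) x.
Proof. intros; apply (ex_derive_plus f g); auto. Qed.
Lemma exR_minus (f g : R -> R) x : ex_derive f x -> ex_derive g x -> ex_derive (fun y => f y - g y) x.
Proof. intros; apply (ex_derive_minus f g); auto. Qed.
Lemma isR_plus (f g : R -> R) x a b : is_derive f x a -> is_derive g x b -> is_derive (fun y => f y + g y) x (a + b).
Proof. intros; apply (is_derive_plus f g); auto. Qed.
Lemma isR_minus (f g : R -> R) x a b : is_derive f x a -> is_derive g x b -> is_derive (fun y => f y - g y) x (a - b).
Proof. intros; apply (is_derive_minus f g); auto. Qed.
Lemma isR_mult (f g : R -> R) x a b : is_derive f x a -> is_derive g x b -> is_derive (fun y => f y * g y) x (a * g x + f x * b).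
Proof. intros; apply (is_derive_mult f g); auto. intros; apply Rmult_comm. Qed.

Lemma isR_mult' (f g : R -> R) x a b v : is_derive f x a -> is_derive g x b -> v = a * g x + f x * b -> is_derive (fun y => f y * g y) x v.
Proof. intros; subst; apply isR_mult; auto. Qed.
Lemma isR_plus' (f g : R -> R) x a b v : is_derive f x a -> is_derive g x b -> v = a + b -> is_derive (fun y => f y + g y) x v.
Proof. intros; subst; apply isR_plus; auto. Qed.

Definition Sm (f : R -> R) := forall j t, ex_derive (Derive_n f j) t.

Lemma Sm_Derive_n_plus f g n t : Sm f -> Sm g ->
  Derive_n (fun x => f x + g x) n t = Derive_n f n t + Derive_n g n t.
Proof. intros Hf Hg. apply Derive_n_plus; apply filter_forall; intros y k _;
  destruct k; simpl; auto. Qed.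

Lemma Sm_plus f g : Sm f -> Sm g -> Sm (fun x => f x + g x).
Proof. intros Hf Hg j t.
  assert (E: Derive_n (fun x => f x + g x) j = fun t => Derive_n f j t + Derive_n g j t).
  { apply functional_extensionality; intros; apply Sm_Derive_n_plus; auto. }
  rewrite E. apply exR_plus; auto. Qed.

Lemma Sm_scal_r f a : Sm f -> Sm (fun x => f x * a).
Proof. intros Hf j t.
  assert (E: Derive_n (fun x => f x * a) j = fun t => Derive_n f j t * a).
  { apply functional_extensionality; intros; apply Derive_n_scal_r. }
  rewrite E. apply ex_derive_mult; auto. apply ex_derive_const. Qed.

Lemma Sm_scal_l f a : Sm f -> Sm (fun x => a * f x).
Proof. intros Hf j t.
  assert (E: Derive_n (fun x => a * f x) j = fun t => a * Derive_n f j t).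
  { apply functional_extensionality; intros; apply Derive_n_scal_l. }
  rewrite E. apply ex_derive_scal; auto. Qed.

Lemma Sm_const c : Sm (fun _ => c).
Proof. intros j t. destruct j.
  simpl. apply ex_derive_const.
  assert (E: Derive_n (fun _ : R => c) (S j) = fun _ => 0).
  { apply functional_extensionality; intros; apply Derive_n_const. }
  rewrite E. apply ex_derive_const. Qed.

Lemma lin_factor Q a : Sm Q ->
  (forall n t, Derive_n (fun x => Q x * (x - a)) (S n) t =
     Derive_n Q (S n) t * (t - a) + INR (S n) * Derive_n Q n t)
  /\ Sm (fun x => Q x * (x - a)).
Proof. intros HQ.
  assert (H1: forall n t, Derive_n (fun x => Q x * (x - a)) (S n) t =
     Derive_n Q (S n) t * (t - a) + INR (S n) * Derive_n Q n t).
  { induction n; intros t.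
    - simpl. apply is_derive_unique.
      assert (HQ0 := HQ O t). simpl in HQ0.
      apply Derive_correct in HQ0.
      eapply isR_mult'; eauto. auto_derive; auto. simpl; ring.
    - change (Derive_n (fun x => Q x * (x - a)) (S (S n)) t) with
        (Derive (Derive_n (fun x => Q x * (x - a)) (S n)) t).
      rewrite (functional_extensionality _ _ IHn).
      apply is_derive_unique.
      assert (A1 := HQ (S n) t). assert (A2 := HQ n t).
      apply Derive_correct in A1. apply Derive_correct in A2.
      eapply isR_plus'. eapply isR_mult'. apply A1. auto_derive; auto. reflexivity.
      apply is_derive_scal. apply A2. rewrite (S_INR (S n)). simpl. ring. }
  split; auto.
  intros j t. destruct j.
  - simpl. apply ex_derive_mult. apply (HQ O t). auto_derive; auto.
  - rewrite (functional_extensionality _ _ (H1 j)).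
    apply exR_plus. apply ex_derive_mult. apply HQ. auto_derive; auto.
    apply ex_derive_scal. apply HQ.
Qed.

Lemma ln_le' x y : 0 < x -> x <= y -> ln x <= ln y.
Proof. intros H1 H2. destruct H2. left; apply ln_increasing; auto. subst; lra. Qed.

Ltac posR := repeat (apply Rmult_lt_0_compat || apply Rinv_0_lt_compat || apply pow_lt || apply Rplus_lt_0_compat); try lra.

Fixpoint cnt (m:nat) (c: nat -> bool) : nat :=
  match m with O => O | S m => (cnt m c + (if c m then 0 else 1))%nat end.

Lemma prod_lin (m:nat) (c: nat -> bool) (a: nat -> R) :
  Sm (fun t => prodR m (fun j => if c j then 1 else t - a j)) /\
  (forall t, Derive_n (fun t => prodR m (fun j => if c j then 1 else t - a j)) (cnt m c) t = INR (fact (cnt m c))) /\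
  (forall n t, (cnt m c < n)%nat -> Derive_n (fun t => prodR m (fun j => if c j then 1 else t - a j)) n t = 0).
Proof.
  induction m.
  - simpl. split; [apply Sm_const|split]. intros; reflexivity.
    intros n t Hn. destruct n. lia. apply Derive_n_const.
  - destruct IHm as [S1 [S2 S3]]. simpl. destruct (c m).
    + assert (E: (fun t => prodR m (fun j => if c j then 1 else t - a j) * 1) =
                 (fun t => prodR m (fun j => if c j then 1 else t - a j))).
      { apply functional_extensionality; intros; ring. }
      rewrite E, Nat.add_0_r. auto.
    + destruct (lin_factor _ (a m) S1) as [L1 L2].
      split; auto. split.
      * intros t. rewrite Nat.add_1_r. rewrite L1. rewrite S2, S3 by lia.
        change (fact (S (cnt m c))) with (S (cnt m c) * fact (cnt m c))%nat.
        rewrite mult_INR. ring.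
      * intros n t Hn. destruct n. lia. rewrite L1. rewrite !S3 by lia. ring.
Qed.

Definition w (n:nat) (x: nat -> R) (i:nat) : R :=
  prodR (S n) (fun j => if Nat.eqb j i then 1 else x i - x j).
Definition DD (n:nat) (x y: nat -> R) : R := sumR (S n) (fun i => y i / w n x i).
Definition lag (n:nat) (x: nat -> R) (i:nat) (t:R) : R :=
  prodR (S n) (fun j => if Nat.eqb j i then 1 else t - x j) * / w n x i.
Definition Pint (n:nat) (x y: nat -> R) (t:R) : R := sumR (S n) (fun i => y i * lag n x i t).

Definition incr (n:nat) (x: nat -> R) := forall i, (i < n)%nat -> x i < x (S i).

Lemma incr_lt n x : incr n x -> forall i j, (i < j)%nat -> (j <= n)%nat -> x i < x j.
Proof. intros H i j Hij Hj. induction j. lia.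
  destruct (Nat.eq_dec i j). subst. apply H; lia.
  apply Rlt_trans with (x j). apply IHj; lia. apply H; lia. Qed.
Lemma incr_le n x : incr n x -> forall i j, (i <= j)%nat -> (j <= n)%nat -> x i <= x j.
Proof. intros H i j Hij Hj. destruct (Nat.eq_dec i j). subst; lra.
  left; apply (incr_lt n); auto; lia. Qed.

Lemma w_nz n x i : incr n x -> (i <= n)%nat -> w n x i <> 0.
Proof. intros H Hi. unfold w. apply prodR_nz. intros j Hj.
  destruct (Nat.eqb_spec j i). lra.
  destruct (Nat.lt_ge_cases i j).
  assert (x i < x j) by (apply (incr_lt n); auto; lia). lra.
  assert (x j < x i) by (apply (incr_lt n); auto; lia). lra. Qed.

Lemma cnt_skip n i : (i <= n)%nat -> cnt (S n) (fun j => Nat.eqb j i) = n.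
Proof. intros Hi. cut (forall m, cnt m (fun j => Nat.eqb j i) = if Nat.leb m i then m else (m - 1)%nat).
  intros H. rewrite H. destruct (Nat.leb_spec (S n) i). lia. lia.
  induction m. reflexivity. cbn [cnt]. rewrite IHm.
  destruct (Nat.eqb_spec m i); destruct (Nat.leb_spec m i); destruct (Nat.leb_spec (S m) i); lia. Qed.

Lemma Sm_sumR n (F : nat -> R -> R) : (forall i, Sm (F i)) ->
  Sm (fun t => sumR n (fun i => F i t)) /\
  forall k t, Derive_n (fun t => sumR n (fun i => F i t)) k t = sumR n (fun i => Derive_n (F i) k t).
Proof. intros HF. induction n.
  - simpl. split. apply Sm_const. intros k t. destruct k. reflexivity. apply Derive_n_const.
  - destruct IHn as [A B]. simpl. split. apply Sm_plus; auto.
    intros k t. rewrite Sm_Derive_n_plus; auto. rewrite B; auto. Qed.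

Lemma Pint_props n x y : incr n x ->
  Sm (Pint n x y) /\
  (forall t, Derive_n (Pint n x y) n t = INR (fact n) * DD n x y) /\
  (forall l, (l <= n)%nat -> Pint n x y (x l) = y l).
Proof. intros Hx.
  assert (Hl: forall i, (i <= n)%nat -> Sm (lag n x i) /\ forall t, Derive_n (lag n x i) n t = INR (fact n) / w n x i).
  { intros i Hi. destruct (prod_lin (S n) (fun j => Nat.eqb j i) x) as [A [B _]].
    rewrite cnt_skip in B by auto. unfold lag. split.
    apply Sm_scal_r; auto. intros t. rewrite Derive_n_scal_r. rewrite B. reflexivity. }
  assert (Hsm: forall i, Sm (fun t => (if Nat.leb i n then y i else 0) * lag n x i t)).
  { intros i. destruct (Nat.leb_spec i n). apply Sm_scal_l. apply Hl; auto.
    assert (E: (fun t => 0 * lag n x i t) = fun _ => 0). apply functional_extensionality; intros; ring.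
    rewrite E; apply Sm_const. }
  destruct (Sm_sumR (S n) _ Hsm) as [A B].
  assert (EP: Pint n x y = fun t => sumR (S n) (fun i => (if Nat.leb i n then y i else 0) * lag n x i t)).
  { apply functional_extensionality; intros t. unfold Pint. apply sumR_ext. intros j Hj.
    destruct (Nat.leb_spec j n); try lia. reflexivity. }
  rewrite EP. split; auto. split.
  - intros t. rewrite B. unfold DD. 
    assert (forall m, (m <= S n)%nat -> sumR m (fun i => Derive_n (fun t0 => (if Nat.leb i n then y i else 0) * lag n x i t0) n t) = INR (fact n) * sumR m (fun i => y i / w n x i)).
    { induction m; intros Hm. simpl; ring. simpl. rewrite IHm by lia.
      rewrite Derive_n_scal_l. destruct (Nat.leb_spec m n); try lia.
      rewrite (proj2 (Hl m H)). unfold Rdiv. ring. }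
    apply H; lia.
  - intros l Hln. rewrite (sumR_single _ _ l). 
    destruct (Nat.leb_spec l n); try lia. unfold lag.
    replace (prodR (S n) (fun j => if Nat.eqb j l then 1 else x l - x j)) with (w n x l) by reflexivity.
    field. apply w_nz; auto. lia.
    intros j Hj Hjl. unfold lag. rewrite (prodR_zero _ _ l). ring. lia.
    destruct (Nat.eqb_spec l j). lia. ring.
Qed.

Lemma ex_derive_cont (g : R -> R) t : ex_derive g t -> continuity_pt g t.
Proof. intros H. apply continuity_pt_filterlim. apply (ex_derive_continuous (K:=R_AbsRing) (V:=R_NormedModule) g t H). Qed.

Lemma rolle_D (g : R -> R) a b : a < b -> g a = g b ->
  (forall t, a <= t <= b -> ex_derive g t) -> exists c, a < c < b /\ Derive g c = 0.
Proof. intros Hab Hg Hd.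
  assert (pr: forall t, a < t < b -> derivable_pt g t).
  { intros t Ht. apply ex_derive_Reals_0. apply Hd; lra. }
  destruct (Rolle g a b pr) as [c [P HP]]; auto.
  intros t Ht. apply ex_derive_cont; auto.
  exists c. split; auto. rewrite <- HP. symmetry; apply Derive_Reals. Qed.

Lemma gen_rolle n : forall (g : R -> R) (x : nat -> R), incr n x ->
  (forall i, (i <= n)%nat -> g (x i) = 0) ->
  (forall j t, (j < n)%nat -> x O <= t <= x n -> ex_derive (Derive_n g j) t) ->
  exists xi, x O <= xi <= x n /\ Derive_n g n xi = 0.
Proof.
  induction n; intros g x Hx Hz Hd.
  - exists (x O). split. lra. simpl. apply Hz; lia.
  - assert (HC: forall i, exists c, (i <= n)%nat -> x i < c < x (S i) /\ Derive g c = 0).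
    { intros i. destruct (Nat.le_gt_cases i n).
      - assert (Hi: x i < x (S i)) by (apply Hx; lia).
        destruct (rolle_D g (x i) (x (S i))) as [c Hc]; auto.
        rewrite !Hz; auto; lia.
        intros t Ht. apply (Hd O t). lia. split.
        apply Rle_trans with (x i). apply (incr_le (S n)); auto; lia. lra.
        apply Rle_trans with (x (S i)). lra. apply (incr_le (S n)); auto; lia.
        exists c; auto.
      - exists 0; intros; lia. }
    apply choice in HC. destruct HC as [c Hc].
    assert (Hc0: x O < c O) by (apply Hc; lia).
    assert (Hcn: c n < x (S n)) by (apply Hc; lia).
    destruct (IHn (Derive g) c) as [xi [Hxi1 Hxi2]].
    + intros i Hi. apply Rlt_trans with (x (S i)). apply Hc; lia. apply Hc; lia.
    + intros i Hi. apply Hc; auto.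
    + intros j t Hj Ht.
      assert (E: Derive_n (Derive g) j = Derive_n g (S j)).
      { apply functional_extensionality; intros s.
        change (Derive g) with (Derive_n g 1). rewrite Derive_n_comp. f_equal. lia. }
      rewrite E. apply Hd. lia. lra.
    + exists xi. split. lra.
      change (Derive g) with (Derive_n g 1) in Hxi2. rewrite Derive_n_comp in Hxi2.
      rewrite Nat.add_1_r in Hxi2. auto.
Qed.

Lemma DD_mvt (f : R -> R) lo hi n (x : nat -> R) :
  (forall j t, lo < t < hi -> ex_derive (Derive_n f j) t) ->
  incr n x -> lo < x O -> x n < hi ->
  exists xi, x O <= xi <= x n /\ Derive_n f n xi = INR (fact n) * DD n x (fun i => f (x i)).
Proof.
  intros Hf Hx Hlo Hhi.
  set (y := fun i => f (x i)).
  destruct (Pint_props n x y Hx) as [PS [PD PI]].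
  set (g := fun t => f t - Pint n x y t).
  assert (Hg: forall j t, lo < t < hi -> Derive_n g j t = Derive_n f j t - Derive_n (Pint n x y) j t).
  { intros j t Ht. unfold g. apply Derive_n_minus.
    - apply (locally_interval _ t lo hi). simpl; lra. simpl; lra.
      intros s H1 H2 k Hk. simpl in H1, H2. destruct k. exact I. simpl. apply Hf; lra.
    - apply filter_forall. intros s k Hk. destruct k. exact I. apply PS. }
  destruct (gen_rolle n g x Hx) as [xi [H1 H2]].
  - intros i Hi. unfold g. rewrite PI; auto. unfold y; ring.
  - intros j t Hj Ht.
    assert (Ht' : lo < t < hi) by lra.
    apply (ex_derive_ext_loc (fun s => Derive_n f j s - Derive_n (Pint n x y) j s)).
    apply (locally_interval _ t lo hi); simpl; try lra.
    intros s A B. symmetry. apply Hg. lra.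
    apply exR_minus. apply Hf; auto. apply PS.
  - exists xi. split; auto. rewrite Hg in H2 by lra. rewrite PD in H2. lra.
Qed.

Definition isZ (r : R) := exists z : Z, r = IZR z.
Lemma isZ_mult a b : isZ a -> isZ b -> isZ (a * b).
Proof. intros [x ->] [y ->]. exists (x * y)%Z. now rewrite mult_IZR. Qed.
Lemma isZ_minus a b : isZ a -> isZ b -> isZ (a - b).
Proof. intros [x ->] [y ->]. exists (x - y)%Z. now rewrite minus_IZR. Qed.
Lemma isZ_plus a b : isZ a -> isZ b -> isZ (a + b).
Proof. intros [x ->] [y ->]. exists (x + y)%Z. now rewrite plus_IZR. Qed.
Lemma isZ_1 : isZ 1. Proof. exists 1%Z; reflexivity. Qed.
Lemma isZ_0 : isZ 0. Proof. exists 0%Z; reflexivity. Qed.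
Lemma isZ_prod n F : (forall j, (j < n)%nat -> isZ (F j)) -> isZ (prodR n F).
Proof. induction n; simpl; intros H. apply isZ_1. apply isZ_mult; auto. Qed.
Lemma isZ_sum n F : (forall j, (j < n)%nat -> isZ (F j)) -> isZ (sumR n F).
Proof. induction n; simpl; intros H. apply isZ_0. apply isZ_plus; auto. Qed.
Lemma isZ_ge1 r : isZ r -> r <> 0 -> 1 <= Rabs r.
Proof. intros [z ->] H. rewrite <- abs_IZR. apply IZR_le.
  assert (z <> 0%Z) by (intro; subst; apply H; reflexivity). lia. Qed.

Lemma prodR_pick m F i : (i < m)%nat ->
  prodR m F = F i * prodR m (fun j => if Nat.eqb j i then 1 else F j).
Proof. induction m; intros Hi; simpl. lia.
  destruct (Nat.eqb_spec m i).
  - subst. rewrite (prodR_ext i (fun j => if Nat.eqb j i then 1 else F j) F). ring.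
    intros j Hj. destruct (Nat.eqb_spec j i); [lia|auto].
  - rewrite IHm by lia. ring. Qed.

Definition Dprod (n:nat) (x: nat -> R) : R :=
  prodR (S n) (fun l => prodR l (fun i => x l - x i)).

Lemma Dprod_div n x : (forall j, isZ (x j)) ->
  forall i, (i <= n)%nat -> exists r, isZ r /\ Dprod n x = r * w n x i.
Proof. intros HZ. induction n; intros i Hi.
  - exists 1. split. apply isZ_1. unfold Dprod, w. simpl.
    destruct i; [|lia]. simpl. ring.
  - assert (Ew: w (S n) x i = w n x i * (if Nat.eqb (S n) i then 1 else x i - x (S n))).
    { reflexivity. }
    assert (ED: Dprod (S n) x = Dprod n x * prodR (S n) (fun j => x (S n) - x j)).
    { reflexivity. }
    destruct (Nat.eq_dec i (S n)).
    + subst. exists (Dprod n x). split.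
      apply isZ_prod. intros l _. apply isZ_prod. intros; apply isZ_minus; auto.
      rewrite ED, Ew. rewrite Nat.eqb_refl. unfold w. simpl prodR at 2.
      rewrite (prodR_ext n (fun j => if Nat.eqb j (S n) then 1 else x (S n) - x j) (fun j => x (S n) - x j)).
      2:{ intros j Hj. destruct (Nat.eqb_spec j (S n)); [lia|auto]. }
      destruct (Nat.eqb_spec n (S n)); [lia|]. simpl. ring.
    + destruct (IHn i) as [r [Hr E]]. lia.
      rewrite ED, Ew, E. destruct (Nat.eqb_spec (S n) i); [lia|].
      rewrite (prodR_pick (S n) _ i) by lia.
      exists (- r * prodR (S n) (fun j => if Nat.eqb j i then 1 else x (S n) - x j)).
      split. apply isZ_mult. destruct Hr as [z ->]. exists (- z)%Z. now rewrite opp_IZR.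
      apply isZ_prod. intros j _. destruct (Nat.eqb j i). apply isZ_1. apply isZ_minus; auto.
      ring.
Qed.

Fixpoint tri (n:nat) : nat := match n with O => O | S n => (tri n + S n)%nat end.

Lemma prodR_bound m F H : (forall j, (j < m)%nat -> 0 < F j <= H) -> 0 < prodR m F <= H ^ m.
Proof. induction m; simpl; intros HF. lra.
  destruct IHm as [A B]. intros; apply HF; lia.
  assert (C := HF m (Nat.lt_succ_diag_r m)). split. apply Rmult_lt_0_compat; lra.
  rewrite Rmult_comm. apply Rmult_le_compat; lra. Qed.

Lemma Dprod_bound n N x : incr N x -> (n <= N)%nat -> 0 < Dprod n x <= (x N - x O) ^ tri n.
Proof. intros Hx. induction n; intros Hn.
  - unfold Dprod; simpl; lra.
  - unfold Dprod. change (prodR (S (S n)) (fun l => prodR l (fun i => x l - x i)))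
      with (Dprod n x * prodR (S n) (fun i => x (S n) - x i)).
    destruct (IHn ltac:(lia)) as [A B].
    destruct (prodR_bound (S n) (fun i => x (S n) - x i) (x N - x O)) as [C D].
    { intros j Hj. split. assert (x j < x (S n)) by (apply (incr_lt N); auto; lia). lra.
      assert (x O <= x j) by (apply (incr_le N); auto; lia).
      assert (x (S n) <= x N) by (apply (incr_le N); auto; lia). lra. }
    simpl tri. rewrite pow_add. split. apply Rmult_lt_0_compat; lra.
    apply Rmult_le_compat; lra. Qed.

Lemma DD_split n x y e : DD n x y = DD n x (fun i => y i - e i) + DD n x e.
Proof. unfold DD. generalize (S n). induction n0; simpl. ring. rewrite IHn0. unfold Rdiv. ring. Qed.

Lemma Rabs_prod_ge1 m F : (forall j, (j < m)%nat -> 1 <= Rabs (F j)) -> 1 <= Rabs (prodR m F).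
Proof. induction m; simpl; intros H. rewrite Rabs_R1; lra.
  rewrite Rabs_mult. assert (1 <= Rabs (prodR m F)) by (apply IHm; intros; apply H; lia).
  assert (1 <= Rabs (F m)) by (apply H; lia). nra. Qed.

Lemma sumR_abs_bound m F d : (forall j, (j < m)%nat -> Rabs (F j) <= d) -> Rabs (sumR m F) <= INR m * d.
Proof. induction m; cbn [sumR]; intros H. rewrite Rabs_R0; simpl; lra.
  eapply Rle_trans. apply Rabs_triang. rewrite S_INR.
  assert (Rabs (sumR m F) <= INR m * d) by (apply IHm; intros; apply H; lia).
  assert (Rabs (F m) <= d) by (apply H; lia). lra. Qed.

Lemma block (f : R -> R) lo hi n (z : nat -> Z) (m : nat -> Z) (delta lam Lam : R) :
  (forall j t, lo < t < hi -> ex_derive (Derive_n f j) t) ->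
  (forall i, (i < n)%nat -> (z i < z (S i))%Z) ->
  lo < IZR (z O) -> IZR (z n) < hi ->
  (forall i, (i <= n)%nat -> Rabs (f (IZR (z i)) - IZR (m i)) < delta) ->
  (forall t, IZR (z O) <= t <= IZR (z n) -> lam <= Rabs (Derive_n f n t) <= Lam) ->
  INR (S n) * delta < lam / INR (fact n) ->
  1 <= (Lam / INR (fact n) + INR (S n) * delta) * (IZR (z n) - IZR (z O)) ^ tri n.
Proof.
  intros Hf Hz Hlo Hhi Hm Hb Hd.
  set (x := fun i => IZR (z i)).
  assert (Hx: incr n x). { intros i Hi. apply IZR_lt. apply Hz; auto. }
  destruct (DD_mvt f lo hi n x Hf Hx Hlo Hhi) as [xi [Hxi E]].
  assert (Hfact: 0 < INR (fact n)) by (apply lt_0_INR; apply lt_O_fact).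
  set (e := fun i => f (x i) - IZR (m i)).
  assert (Es := DD_split n x (fun i => f (x i)) e). cbv beta in Es.
  assert (Em: DD n x (fun i => f (x i) - e i) = DD n x (fun i => IZR (m i))).
  { unfold DD. apply sumR_ext. intros j _. unfold e. f_equal. ring. }
  rewrite Em in Es.
  assert (Hdelta: 0 <= delta).
  { assert (H0 := Hm O ltac:(lia)). assert (0 <= Rabs (f (IZR (z 0%nat)) - IZR (m 0%nat))) by apply Rabs_pos. lra. }
  assert (He: Rabs (DD n x e) <= INR (S n) * delta).
  { unfold DD. apply sumR_abs_bound. intros j Hj. unfold Rdiv. rewrite Rabs_mult.
    assert (Hw: 1 <= Rabs (w n x j)).
    { unfold w. apply Rabs_prod_ge1. intros l Hl. destruct (Nat.eqb_spec l j). rewrite Rabs_R1; lra.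
      unfold x. rewrite <- minus_IZR, <- abs_IZR. apply IZR_le.
      assert (z l <> z j).
      { destruct (Nat.lt_ge_cases l j).
        assert (x l < x j) by (apply (incr_lt n); auto; lia). unfold x in *. intro HH. rewrite HH in *. lra.
        assert (x j < x l) by (apply (incr_lt n); auto; lia). unfold x in *. intro HH. rewrite HH in *. lra. }
      lia. }
    rewrite Rabs_inv. assert (Rabs (e j) < delta) by (apply Hm; lia).
    assert (0 <= Rabs (e j)) by apply Rabs_pos.
    assert (/ Rabs (w n x j) <= 1). { rewrite <- Rinv_1. apply Rinv_le_contravar; lra. }
    assert (0 < / Rabs (w n x j)) by (apply Rinv_0_lt_compat; lra). nra. }
  assert (Hxib := Hb xi Hxi).
  assert (HfDD: DD n x (fun i => f (x i)) = Derive_n f n xi / INR (fact n)).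
  { rewrite E. field. lra. }
  assert (Habs: lam / INR (fact n) <= Rabs (DD n x (fun i => f (x i))) <= Lam / INR (fact n)).
  { rewrite HfDD. unfold Rdiv. rewrite Rabs_mult, Rabs_inv, (Rabs_right (INR (fact n))) by lra.
    assert (0 < / INR (fact n)) by (apply Rinv_0_lt_compat; lra). split; apply Rmult_le_compat_r; lra. }
  set (md := DD n x (fun i => IZR (m i))).
  assert (Hmd: isZ (md * Dprod n x)).
  { unfold md, DD. 
    assert (forall k, (k <= S n)%nat -> isZ (sumR k (fun i => IZR (m i) / w n x i) * Dprod n x)).
    { induction k; intros Hk. simpl. rewrite Rmult_0_l. apply isZ_0.
      simpl. rewrite Rmult_plus_distr_r. apply isZ_plus. apply IHk; lia.
      destruct (Dprod_div n x (fun j => ex_intro _ (z j) eq_refl) k ltac:(lia)) as [r [Hr ED]].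
      rewrite ED. replace (IZR (m k) / w n x k * (r * w n x k)) with (IZR (m k) * r).
      apply isZ_mult; auto. exists (m k); auto. field. apply w_nz; auto; lia. }
    apply H; lia. }
  destruct (Dprod_bound n n x Hx (le_n n)) as [DP1 DP2].
  assert (Hmd0: md <> 0).
  { intro H0. unfold md in H0. rewrite H0 in Es. rewrite Rplus_0_l in Es. rewrite Es in Habs.
    assert (lam / INR (fact n) <= INR (S n) * delta) by lra. lra. }
  assert (1 <= Rabs (md * Dprod n x)).
  { apply isZ_ge1; auto. apply Rmult_integral_contrapositive; split; lra. }
  rewrite Rabs_mult, (Rabs_right (Dprod n x)) in H by lra.
  assert (Rabs md <= Lam / INR (fact n) + INR (S n) * delta).
  { replace md with (DD n x (fun i => f (x i)) - DD n x e) by (unfold md; lra).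
    eapply Rle_trans. apply Rabs_triang. rewrite Rabs_Ropp. lra. }
  change (1 <= (Lam / INR (fact n) + INR (S n) * delta) * (x n - x O) ^ tri n).
  assert (0 <= Rabs md) by apply Rabs_pos.
  eapply Rle_trans. apply H. apply Rmult_le_compat; lra.
Qed.

Lemma SS_filter (f : Z -> bool) l : StronglySorted Z.lt l -> StronglySorted Z.lt (filter f l).
Proof. induction 1. constructor. simpl. destruct (f a). constructor; auto.
  rewrite Forall_forall in *. intros x Hx. apply filter_In in Hx. apply H0; tauto. auto. Qed.

Lemma SS_nth l : StronglySorted Z.lt l -> forall i j, (i < j)%nat -> (j < length l)%nat -> (nth i l 0 < nth j l 0%Z)%Z.
Proof. induction 1; intros i j Hij Hj. simpl in Hj; lia.
  destruct j. lia. destruct i.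
  - simpl. rewrite Forall_forall in H0. apply H0. apply nth_In. simpl in Hj; lia.
  - simpl. apply IHStronglySorted; simpl in Hj; lia. Qed.

Lemma count_blocks (l : list Z) (k : nat) (h0 M : R) :
  (1 <= k)%nat -> 0 < h0 -> 0 <= M ->
  (forall s, (s + k < length l)%nat -> h0 <= IZR (nth (s + k) l 0%Z) - IZR (nth s l 0%Z)) ->
  (forall s, (s < length l)%nat -> M <= IZR (nth s l 0%Z) <= 2 * M) ->
  INR (length l) <= INR k * (M / h0) + INR k.
Proof.
  intros Hk Hh HM Hb Hr.
  destruct (length l) as [|R] eqn:HR.
  - simpl. assert (0 <= INR k) by apply pos_INR. assert (0 <= M / h0) by (unfold Rdiv; apply Rmult_le_pos; [lra| left; apply Rinv_0_lt_compat; lra]). nra.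
  - set (J := (R / k)%nat).
    assert (HJ: forall j, (j <= J)%nat -> INR j * h0 <= IZR (nth (j * k) l 0%Z) - IZR (nth 0 l 0%Z)).
    { induction j; intros Hj. simpl. lra.
      assert (j * k + k <= J * k)%nat by nia.
      assert (J * k <= R)%nat by (unfold J; rewrite Nat.mul_comm; apply Nat.Div0.mul_div_le).
      assert (Hb' := Hb (j * k)%nat ltac:(lia)).
      replace (S j * k)%nat with (j * k + k)%nat by lia. rewrite S_INR.
      assert (IH := IHj ltac:(lia)). lra. }
    assert (A := HJ J (le_n J)).
    assert (J * k <= R)%nat by (unfold J; rewrite Nat.mul_comm; apply Nat.Div0.mul_div_le).
    assert (B1 := Hr (J * k)%nat ltac:(lia)). assert (B2 := Hr O ltac:(lia)).
    assert (INR J <= M / h0). { apply (Rmult_le_reg_r h0); auto. unfold Rdiv. rewrite Rmult_assoc, Rinv_l by lra. lra. }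
    assert (S R <= k * J + k)%nat.
    { unfold J. assert (R = k * (R / k) + R mod k)%nat by (apply Nat.div_mod; lia).
      assert (R mod k < k)%nat by (apply Nat.mod_upper_bound; lia). lia. }
    apply le_INR in H1. rewrite plus_INR, mult_INR in H1.
    assert (0 <= INR k) by apply pos_INR. nra.
Qed.

Lemma Rpower_pos x y : 0 < Rpower x y.
Proof. unfold Rpower; apply exp_pos. Qed.

Lemma pow_lt_l a b n : 0 <= a < b -> (1 <= n)%nat -> a ^ n < b ^ n.
Proof. intros H Hn. induction n. lia. destruct n. simpl; lra.
  change (a * a ^ S n < b * b ^ S n).
  assert (a ^ S n < b ^ S n) by (apply IHn; lia).
  assert (0 <= a ^ S n) by (apply pow_le; lra).
  apply Rle_lt_trans with (a * b ^ S n). apply Rmult_le_compat_l; lra.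
  apply Rmult_lt_compat_r; lra. Qed.

Lemma root_bound (X H : R) (q : nat) : (1 <= q)%nat -> 0 < X -> 0 <= H -> 1 <= X * H ^ q ->
  / Rpower X (/ INR q) <= H.
Proof. intros Hq HX HH H1.
  set (r := Rpower X (/ INR q)).
  assert (Hr: 0 < r) by apply Rpower_pos.
  assert (Hrq: r ^ q = X).
  { unfold r. rewrite <- Rpower_pow by apply Rpower_pos. rewrite Rpower_mult.
    rewrite Rinv_l. apply Rpower_1; auto. apply not_0_INR; lia. }
  destruct (Rle_lt_dec (/ r) H) as [|Hlt]; auto.
  exfalso. assert (H ^ q < (/ r) ^ q) by (apply pow_lt_l; auto; lra).
  rewrite pow_inv, Hrq in H0.
  assert (X * H ^ q < X * / X) by (apply Rmult_lt_compat_l; auto).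
  rewrite Rinv_r in H2; lra. Qed.

Lemma isR_const (c x : R) : is_derive (fun _ : R => c) x 0.
Proof. auto_derive; auto. Qed.

Lemma isR_scal' (f : R -> R) x a k v : is_derive f x a -> v = k * a -> is_derive (fun y => k * f y) x v.
Proof. intros H ->. apply is_derive_scal; auto. Qed.

Definition term := (Z * nat * nat * nat * bool)%type.

Definition evalT (L : R) (tau : term) (t : R) : R :=
  let '(c, p, n, m, e) := tau in
  IZR c * (if e then L + ln (t - 1) else 1) * (/ (t - 1)) ^ p * (/ t) ^ n * (/ ln t) ^ m.

Definition evalL (L : R) (l : list term) (t : R) : R :=
  fold_right (fun tau acc => evalT L tau t + acc) 0 l.

Definition derivT (tau : term) : list term :=
  let '(c, p, n, m, e) := tau in
  (if e then (c, S p, n, m, false) :: nil else nil) ++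
  ((- c * Z.of_nat p)%Z, S p, n, m, e) :: ((- c * Z.of_nat n)%Z, p, S n, m, e) ::
  ((- c * Z.of_nat m)%Z, p, S n, S m, e) :: nil.

Definition keyeq (a b : term) : bool :=
  let '(_, p, n, m, e) := a in let '(_, p', n', m', e') := b in
  Nat.eqb p p' && Nat.eqb n n' && Nat.eqb m m' && Bool.eqb e e'.

Fixpoint addT (tau : term) (l : list term) : list term :=
  match l with
  | nil => tau :: nil
  | t' :: l' => if keyeq t' tau then
                  (let '(c, p, n, m, e) := t' in let '(c', _, _, _, _) := tau in ((c + c')%Z, p, n, m, e)) :: l'
                else t' :: addT tau l'
  end.

Definition norm (l : list term) : list term := fold_right addT nil l.

Fixpoint Dk (k : nat) : list term :=
  match k with
  | O => (1%Z, O, O, 1%nat, true) :: nil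
  | S k => norm (flat_map derivT (Dk k))
  end.

Lemma evalL_app L l1 l2 t : evalL L (l1 ++ l2) t = evalL L l1 t + evalL L l2 t.
Proof. induction l1; simpl. ring. unfold evalL in *; simpl. rewrite IHl1. ring. Qed.

Lemma evalL_addT L tau l t : evalL L (addT tau l) t = evalT L tau t + evalL L l t.
Proof. induction l as [|a l IH]; simpl. reflexivity.
  destruct (keyeq a tau) eqn:Hk.
  - destruct a as [[[[c p] n] m] e]. destruct tau as [[[[c' p'] n'] m'] e'].
    simpl in Hk. apply andb_prop in Hk as [Hk H4]. apply andb_prop in Hk as [Hk H3].
    apply andb_prop in Hk as [H1 H2].
    apply Nat.eqb_eq in H1, H2, H3. apply Bool.eqb_prop in H4. subst.
    unfold evalL; simpl. rewrite plus_IZR. ring.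
  - unfold evalL in *; simpl. rewrite IH. ring. Qed.

Lemma evalL_norm L l t : evalL L (norm l) t = evalL L l t.
Proof. induction l; simpl. reflexivity. rewrite evalL_addT, IHl. reflexivity. Qed.

Lemma isd_invpow (a : R) (p : nat) t : t <> a ->
  is_derive (fun y => (/ (y - a)) ^ p) t (- INR p * (/ (t - a)) ^ S p).
Proof. intros Ht.
  assert (H1: is_derive (fun y => / (y - a)) t (- (1) / (t - a) ^ 2)).
  { apply (is_derive_inv (fun y => y - a)). auto_derive; auto; ring. lra. }
  eapply is_derive_ext_loc. apply filter_forall. intros; reflexivity.
  replace (- INR p * (/ (t - a)) ^ S p) with (INR p * (- (1) / (t - a) ^ 2) * (/ (t - a)) ^ Init.Nat.pred p).
  apply (is_derive_pow (fun y => / (y - a)) p t). auto.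
  destruct p. simpl; ring. simpl pred. simpl. field. lra. Qed.

Lemma isd_invlnpow (m : nat) t : 1 < t ->
  is_derive (fun y => (/ ln y) ^ m) t (- INR m * / t * (/ ln t) ^ S m).
Proof. intros Ht. assert (Hl: 0 < ln t) by (rewrite <- ln_1; apply ln_increasing; lra).
  assert (H1: is_derive (fun y => / ln y) t (- (/ t) / (ln t) ^ 2)).
  { apply (is_derive_inv ln). apply is_derive_ln; lra. lra. }
  replace (- INR m * / t * (/ ln t) ^ S m) with (INR m * (- (/ t) / (ln t) ^ 2) * (/ ln t) ^ Init.Nat.pred m).
  apply (is_derive_pow (fun y => / ln y) m t). auto.
  destruct m. simpl; ring. simpl pred. simpl. field. lra. Qed.

Lemma derivT_ok L tau t : 1 < t -> is_derive (evalT L tau) t (evalL L (derivT tau) t).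
Proof. intros Ht. destruct tau as [[[[c p] n] m] e].
  assert (Hl: 0 < ln t) by (rewrite <- ln_1; apply ln_increasing; lra).
  assert (HB: is_derive (fun y => if e then L + ln (y - 1) else 1) t (if e then / (t - 1) else 0)).
  { destruct e. auto_derive. lra. field. lra. apply isR_const. }
  assert (P1 := isd_invpow 1 p t ltac:(lra)).
  assert (P2 := isd_invpow 0 n t ltac:(lra)).
  assert (P3 := isd_invlnpow m t Ht).
  unfold evalT.
  eapply is_derive_ext.
  { intros y. instantiate (1 := fun y => IZR c * ((((if e then L + ln (y - 1) else 1) * (/ (y - 1)) ^ p) * (/ (y - 0)) ^ n) * (/ ln y) ^ m)).
    simpl. rewrite Rminus_0_r. ring. }
  eapply isR_scal'.
  eapply isR_mult'. eapply isR_mult'. eapply isR_mult'. apply HB. apply P1. reflexivity. apply P2. reflexivity. apply P3. reflexivity.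
  unfold derivT, evalL. rewrite Rminus_0_r.
  destruct e; simpl; rewrite !mult_IZR, !opp_IZR, <- !INR_IZR_INZ; field; lra.
Qed.

Lemma derivL_ok L l t : 1 < t -> is_derive (evalL L l) t (evalL L (norm (flat_map derivT l)) t).
Proof. intros Ht. rewrite evalL_norm. induction l as [|a l IH].
  - simpl. unfold evalL; simpl. apply isR_const.
  - simpl. rewrite evalL_app. unfold evalL at 1. simpl.
    apply (isR_plus (evalT L a) (evalL L l)). apply derivT_ok; auto. apply IH. Qed.

Definition Fg (L : R) (t : R) : R := (L + ln (t - 1)) / ln t.

Lemma Fg_Dk L : forall k t, 1 < t -> Derive_n (Fg L) k t = evalL L (Dk k) t /\ ex_derive (Derive_n (Fg L) k) t.
Proof.
  assert (E: forall k t, 1 < t -> Derive_n (Fg L) k t = evalL L (Dk k) t).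
  { induction k; intros t Ht.
    - simpl. unfold Fg, evalL, evalT. simpl. field.
      assert (0 < ln t) by (rewrite <- ln_1; apply ln_increasing; lra). lra.
    - simpl Derive_n. rewrite (Derive_ext_loc _ (evalL L (Dk k))).
      apply is_derive_unique. simpl Dk. apply derivL_ok; auto.
      apply (locally_interval _ t 1 p_infty). simpl; lra. simpl; auto.
      intros y H1 _. apply IHk. simpl in H1; lra. }
  intros k t Ht. split. apply E; auto.
  apply (ex_derive_ext_loc (evalL L (Dk k))).
  apply (locally_interval _ t 1 p_infty). simpl; lra. simpl; auto.
  intros y H1 _. symmetry. apply E. simpl in H1; lra.
  eexists. apply derivL_ok; auto.
Qed.

Definition K1m (l : list term) : Z := fold_right (fun (tau : term) (acc : Z) => let '(c,p,n,m,e) := tau in if e then (if Nat.eqb m 2 then c + acc else acc) else acc)%Z 0%Z l.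
Definition K1 (l : list term) : Z := fold_right (fun (tau : term) (acc : Z) => let '(c,p,n,m,e) := tau in if e then c + acc else acc)%Z 0%Z l.
Definition K01 (l : list term) : Z := fold_right (fun (tau : term) (acc : Z) => let '(c,p,n,m,e) := tau in if e then acc else if Nat.eqb m 1 then Z.abs c + acc else acc)%Z 0%Z l.
Definition K02 (l : list term) : Z := fold_right (fun (tau : term) (acc : Z) => let '(c,p,n,m,e) := tau in if e then acc else if Nat.eqb m 1 then acc else Z.abs c + acc)%Z 0%Z l.
Definition check (k : nat) (l : list term) : bool :=
  forallb (fun (tau : term) => let '(c,p,n,m,e) := tau in Z.eqb c 0 || ((Nat.eqb (p + n) k)%bool && Nat.leb 1 m &&
     (if e then Nat.eqb p 0 && Nat.leb 2 m && Z.leb 0 c else true))) l.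
Definition negT (tau : term) : term := let '(c,p,n,m,e) := tau in ((- c)%Z, p, n, m, e).

Lemma evalL_neg L l t : evalL L (map negT l) t = - evalL L l t.
Proof. induction l as [|[[[[c p] n] m] e] l IH]; unfold evalL in *; simpl. ring.
  rewrite IH. rewrite opp_IZR. ring. Qed.

Lemma pow_le1 (a : R) j : 0 <= a <= 1 -> 0 <= a ^ j <= 1.
Proof. intros H. induction j; simpl. lra. split. apply Rmult_le_pos; lra. 
  assert (a * a ^ j <= 1 * 1) by (apply Rmult_le_compat; lra). lra. Qed.

Lemma pow_mono_ge1 (a : R) i j : 1 <= a -> (i <= j)%nat -> a ^ i <= a ^ j.
Proof. intros Ha Hij. apply Rle_pow; auto. Qed.

Lemma bound_list L k l t G : 3 <= t -> (t / (t - 1)) ^ k <= G -> check k l = true ->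
  exists a b, t ^ k * (ln t) ^ 2 * evalL L l t = (L + ln (t - 1)) * a + b /\
    IZR (K1m l) <= a <= IZR (K1 l) /\ Rabs b <= G * (IZR (K01 l) * ln t + IZR (K02 l)).
Proof.
  intros Ht HG Hc.
  set (u := ln t). set (B := L + ln (t - 1)).
  assert (Hu: 1 <= u). { unfold u. rewrite <- (ln_exp 1) at 1. apply ln_le'. apply exp_pos.
    assert (exp 1 <= 3) by apply exp_le_3. lra. }
  set (rho := t / (t - 1)).
  assert (Hrho: 1 <= rho). { unfold rho. apply (Rmult_le_reg_r (t - 1)). lra. unfold Rdiv. rewrite Rmult_assoc, Rinv_l; lra. }
  assert (HG1 : forall p, (p <= k)%nat -> rho ^ p <= G).
  { intros p Hp. eapply Rle_trans. apply (pow_mono_ge1 rho p k); auto. auto. }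
  assert (Hiu: 0 < / u <= 1). { split. apply Rinv_0_lt_compat; lra. rewrite <- Rinv_1. apply Rinv_le_contravar; lra. }
  assert (Gpos: 1 <= G). { eapply Rle_trans. 2: apply (HG1 O); lia. simpl; lra. }
  induction l as [|[[[[c p] n] m] e] l IH].
  - exists 0, 0. unfold evalL; simpl. rewrite Rabs_R0. split. ring. split. lra. 
    unfold K01, K02; simpl. lra.
  - unfold check in Hc. cbn [forallb] in Hc. fold (check k l) in Hc. apply andb_prop in Hc as [Hc1 Hc]. destruct (IH Hc) as [a [b [E1 [E2 E3]]]].
    destruct (Z.eqb_spec c 0) as [Hcz|Hcz].
    { subst c. exists a, b. unfold evalL; simpl fold_right. fold (evalL L l t). unfold evalT.
      split. rewrite <- E1. ring. unfold K1m, K1, K01, K02 in *. cbn [fold_right].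
      destruct e; [destruct (Nat.eqb m 2)|destruct (Nat.eqb m 1)]; simpl Z.add; simpl Z.abs; auto. }
    rewrite Bool.orb_false_l in Hc1.
    apply andb_prop in Hc1 as [Hc1 He]. apply andb_prop in Hc1 as [Hpn Hm].
    apply Nat.eqb_eq in Hpn. apply Nat.leb_le in Hm.
    assert (Hcore: t ^ k * u ^ 2 * ((/ (t - 1)) ^ p * (/ t) ^ n * (/ u) ^ m) = rho ^ p * (u ^ 2 * (/ u) ^ m)).
    { subst k. unfold rho. rewrite pow_add. unfold Rdiv. rewrite Rpow_mult_distr.
      assert (t ^ n * (/ t) ^ n = 1). { rewrite <- Rpow_mult_distr. rewrite Rinv_r by lra. apply pow1. }
      replace (t ^ p * t ^ n * u ^ 2 * ((/ (t - 1)) ^ p * (/ t) ^ n * (/ u) ^ m)) with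
        ((t ^ n * (/ t) ^ n) * (t ^ p * (/ (t - 1)) ^ p * (u ^ 2 * (/ u) ^ m))) by ring.
      rewrite H. ring. }
    assert (Hum: m = 1%nat \/ (2 <= m)%nat) by lia.
    assert (Hu2: (m = 1%nat -> u ^ 2 * (/ u) ^ m = u) /\ ((2 <= m)%nat -> u ^ 2 * (/ u) ^ m = (/ u) ^ (m - 2) /\ 0 <= (/ u) ^ (m - 2) <= 1)).
    { split. intros ->. simpl. field. lra. intros H2.
      replace m with (2 + (m - 2))%nat at 1 by lia. rewrite pow_add. split.
      simpl. field. lra. apply pow_le1. lra. }
    destruct e.
    + apply andb_prop in He as [He Hc0]. apply andb_prop in He as [Hp0 Hm2].
      apply Nat.eqb_eq in Hp0. apply Nat.leb_le in Hm2. apply Z.leb_le in Hc0. subst p.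
      destruct (proj2 Hu2 Hm2) as [Hu3 Hu4].
      exists (IZR c * (/ u) ^ (m - 2) + a), b.
      split.
      * unfold evalL; simpl fold_right. fold (evalL L l t). unfold evalT.
        rewrite Rmult_plus_distr_l, E1. fold u. fold B.
        rewrite !pow_O in Hcore.
        replace (t ^ k * u ^ 2 * (IZR c * B * 1 * (/ t) ^ n * (/ u) ^ m))
          with (IZR c * B * (t ^ k * u ^ 2 * (1 * (/ t) ^ n * (/ u) ^ m))) by ring.
        rewrite Hcore, Hu3. ring.
      * unfold K1m, K1, K01, K02 in *. simpl. split.
        -- assert (0 <= IZR c) by (apply IZR_le; auto).
           assert (0 <= IZR c * (/ u) ^ (m - 2) <= IZR c).
           { split. apply Rmult_le_pos; lra.
             assert (IZR c * (/ u) ^ (m - 2) <= IZR c * 1) by (apply Rmult_le_compat_l; lra). lra. }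
           destruct (Nat.eqb_spec m 2).
           ++ subst m. simpl. rewrite !plus_IZR. simpl in H0. lra.
           ++ rewrite plus_IZR. lra.
        -- auto.
    + exists a, (IZR c * rho ^ p * (u ^ 2 * (/ u) ^ m) + b).
      assert (Hp: (p <= k)%nat) by lia.
      assert (Hr := HG1 p Hp). assert (Hr0: 0 <= rho ^ p) by (apply pow_le; lra).
      split.
      * unfold evalL; simpl fold_right. fold (evalL L l t). unfold evalT.
        rewrite Rmult_plus_distr_l, E1. fold u.
        replace (t ^ k * u ^ 2 * (IZR c * 1 * (/ (t - 1)) ^ p * (/ t) ^ n * (/ u) ^ m))
          with (IZR c * (t ^ k * u ^ 2 * ((/ (t - 1)) ^ p * (/ t) ^ n * (/ u) ^ m))) by ring.
        rewrite Hcore. ring.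
      * unfold K1m, K1, K01, K02 in *. cbn [fold_right]. split. auto.
        assert (0 <= IZR (Z.abs c)) by (apply IZR_le; lia).
        destruct (Nat.eqb_spec m 1).
        -- subst m. rewrite (proj1 Hu2 eq_refl).
           eapply Rle_trans. apply Rabs_triang. rewrite !Rabs_mult, (Rabs_right (rho ^ p)), (Rabs_right u) by lra.
           rewrite <- abs_IZR. rewrite plus_IZR.
           assert (0 <= IZR (Z.abs c) * rho ^ p) by (apply Rmult_le_pos; lra).
           assert (IZR (Z.abs c) * rho ^ p * u <= IZR (Z.abs c) * G * u).
           { apply Rmult_le_compat_r. lra. apply Rmult_le_compat_l; lra. } nra.
        -- destruct (proj2 Hu2 ltac:(lia)) as [Hu3 Hu4]. rewrite Hu3.
           eapply Rle_trans. apply Rabs_triang. rewrite !Rabs_mult, (Rabs_right (rho ^ p)) by lra.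
           rewrite (Rabs_right ((/ u) ^ (m - 2))) by lra.
           rewrite <- abs_IZR. rewrite plus_IZR.
           assert (IZR (Z.abs c) * rho ^ p * (/ u) ^ (m - 2) <= IZR (Z.abs c) * G * 1).
           { apply Rmult_le_compat; try lra. apply Rmult_le_pos; lra. apply Rmult_le_compat_l; lra. }
           nra.
Qed.

Lemma Zrange_sorted lo hi : StronglySorted Z.lt (Zrange lo hi).
Proof. unfold Zrange. generalize (Z.to_nat (hi - lo + 1)) as n. intros n.
  generalize 0%nat as s. induction n; intros s. constructor. simpl. constructor. apply IHn.
  rewrite Forall_forall. intros x Hx. apply in_map_iff in Hx. destruct Hx as [j [<- Hj]].
  apply in_seq in Hj. lia. Qed.

Definition hitP (f : R -> R) (M delta : R) := fun x : Z =>
  if Rlt_dec (IZR x) M then false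
  else if Rlt_dec (2 * M) (IZR x) then false
  else if Rlt_dec (dist_int (f (IZR x))) delta then true else false.

Lemma Rcount_eq f M delta : Rcount f M delta = length (filter (hitP f M delta) (Zrange (up M - 1) (up (2 * M)))).
Proof. reflexivity. Qed.

Lemma hit_props f M delta x : hitP f M delta x = true -> M <= IZR x <= 2 * M /\ dist_int (f (IZR x)) < delta.
Proof. unfold hitP. destruct (Rlt_dec (IZR x) M). discriminate.
  destruct (Rlt_dec (2 * M) (IZR x)). discriminate.
  destruct (Rlt_dec (dist_int (f (IZR x))) delta). intros _. split; auto; lra. discriminate. Qed.

Lemma dist_near t delta : dist_int t < delta -> exists m : Z, Rabs (t - IZR m) < delta.
Proof. unfold dist_int. intros H. destruct (base_Int_part t) as [A B].
  unfold Rmin in H. destruct (Rle_dec _ _).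
  - exists (Int_part t). rewrite Rabs_right; lra.
  - exists (Int_part t + 1)%Z. rewrite plus_IZR. rewrite Rabs_left1; lra. Qed.

Lemma orderk (f : R -> R) (M delta lam Lam : R) (k : nat) (l : list Z) :
  (1 <= k)%nat -> 1 < M -> 0 < delta ->
  (forall j t, 1 < t -> ex_derive (Derive_n f j) t) ->
  (forall t, M <= t <= 2 * M -> lam <= Rabs (Derive_n f k t) <= Lam) ->
  INR (S k) * delta < lam / INR (fact k) ->
  StronglySorted Z.lt l ->
  (forall x, In x l -> M <= IZR x <= 2 * M /\ dist_int (f (IZR x)) < delta) ->
  INR (length l) <= INR k * (M * Rpower (Lam / INR (fact k) + INR (S k) * delta) (/ INR (tri k))) + INR k.
Proof.
  intros Hk HM Hd Hf Hb Hlam Hs Hl.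
  set (X := Lam / INR (fact k) + INR (S k) * delta).
  assert (Htri: (1 <= tri k)%nat). { destruct k. lia. simpl. lia. }
  assert (Hr: forall s, (s < length l)%nat -> M <= IZR (nth s l 0%Z) <= 2 * M).
  { intros s Hs'. apply Hl. apply nth_In; auto. }
  assert (HX: 0 < X).
  { unfold X. assert (Hfact: 0 < INR (fact k)) by (apply lt_0_INR; apply lt_O_fact).
    assert (0 < lam). { assert (0 < INR (S k) * delta) by (apply Rmult_lt_0_compat; auto; apply lt_0_INR; lia).
      assert (0 < lam / INR (fact k)) by lra. 
      apply (Rmult_lt_reg_r (/ INR (fact k))). apply Rinv_0_lt_compat; lra. lra. }
    assert (lam <= Lam). { destruct (Hb M). lra. lra. }
    assert (0 < Lam / INR (fact k)) by (apply Rdiv_lt_0_compat; lra).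
    assert (0 < INR (S k) * delta) by (apply Rmult_lt_0_compat; auto; apply lt_0_INR; lia). lra. }
  assert (Main: INR (length l) <= INR k * (M / / Rpower X (/ INR (tri k))) + INR k).
  { apply count_blocks; auto. apply Rinv_0_lt_compat, Rpower_pos. lra.
    intros s Hsk.
    set (z := fun i => nth (s + i) l 0%Z).
    assert (Hz: forall i, (i < k)%nat -> (z i < z (S i))%Z).
    { intros i Hi. unfold z. apply SS_nth; auto; lia. }
    assert (Hm: forall i, exists m : Z, (i <= k)%nat -> Rabs (f (IZR (z i)) - IZR m) < delta).
    { intros i. destruct (Nat.le_gt_cases i k).
      - destruct (dist_near (f (IZR (z i))) delta) as [m Hm]. apply Hl. unfold z. apply nth_In. lia.
        exists m; auto.
      - exists 0%Z; intros; lia. }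
    apply choice in Hm. destruct Hm as [m Hm].
    assert (Hz0 := Hr s ltac:(lia)). assert (Hzk := Hr (s + k)%nat Hsk).
    assert (Hblk := block f 1 (2 * M + 1) k z m delta lam Lam).
    replace (nth (s + k) l 0%Z) with (z k) by reflexivity.
    replace (nth s l 0%Z) with (z O) by (unfold z; rewrite Nat.add_0_r; reflexivity).
    apply root_bound; auto. 
    - assert (IZR (z O) <= IZR (z k)). { apply IZR_le. destruct k. lia. apply Z.lt_le_incl. unfold z. apply SS_nth; auto; lia. }
      lra.
    - apply Hblk; auto.
      + intros j t Ht. apply Hf. lra.
      + unfold z; rewrite Nat.add_0_r; lra.
      + unfold z; lra.
      + intros t Ht. apply Hb. unfold z in Ht. rewrite Nat.add_0_r in Ht. lra. }
  replace (M / / Rpower X (/ INR (tri k))) with (M * Rpower X (/ INR (tri k))) in Main.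
  auto. unfold Rdiv. rewrite Rinv_inv. reflexivity.
Qed.

Definition sgnD (k : nat) := if Nat.even k then Dk k else map negT (Dk k).

Lemma rho_bound t k : 10001 <= t -> (k <= 6)%nat -> (t / (t - 1)) ^ k <= 1.001.
Proof. intros Ht Hk.
  assert (H1: 1 <= t / (t - 1) <= 1.0001).
  { split; apply (Rmult_le_reg_r (t - 1)); try lra; unfold Rdiv; rewrite Rmult_assoc, Rinv_l; lra. }
  apply Rle_trans with (1.0001 ^ k).
  apply pow_incr; lra.
  apply Rle_trans with (1.0001 ^ 6). apply Rle_pow; [lra|lia]. simpl; lra. Qed.

Lemma Fk_ab L k t : check k (sgnD k) = true -> 10001 <= t -> (k <= 6)%nat ->
  exists a b, t ^ k * (ln t) ^ 2 * Rabs (Derive_n (Fg L) k t) = Rabs ((L + ln (t - 1)) * a + b) /\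
    IZR (K1m (sgnD k)) <= a <= IZR (K1 (sgnD k)) /\
    Rabs b <= 1.001 * (IZR (K01 (sgnD k)) * ln t + IZR (K02 (sgnD k))).
Proof. intros Hc Ht Hk.
  destruct (bound_list L k (sgnD k) t 1.001) as [a [b [E1 [E2 E3]]]]; auto. lra. apply rho_bound; auto.
  exists a, b. split; auto. rewrite <- E1.
  rewrite (proj1 (Fg_Dk L k t ltac:(lra))).
  assert (0 <= t ^ k * ln t ^ 2). { apply Rmult_le_pos. apply pow_le; lra. apply pow2_ge_0. }
  rewrite Rabs_mult, (Rabs_right (t ^ k * ln t ^ 2)) by lra. f_equal.
  unfold sgnD. destruct (Nat.even k). auto. rewrite evalL_neg, Rabs_Ropp. auto. Qed.

Lemma SS_nth_ge l : StronglySorted Z.lt l -> forall i, (i < length l)%nat -> (nth 0 l 0 + Z.of_nat i <= nth i l 0)%Z.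
Proof. intros Hs i. induction i; intros Hi. simpl; lia.
  assert (H := SS_nth l Hs i (S i) ltac:(lia) Hi). specialize (IHi ltac:(lia)). lia. Qed.

Lemma len_span l (D : Z) : StronglySorted Z.lt l ->
  (forall i j, (i < length l)%nat -> (j < length l)%nat -> (nth j l 0 - nth i l 0 < D)%Z) ->
  (0 < D)%Z -> (Z.of_nat (length l) <= D)%Z.
Proof. intros Hs H HD. destruct (length l) eqn:E. lia.
  assert (A := SS_nth_ge l Hs n ltac:(lia)). assert (B := H O n ltac:(lia) ltac:(lia)). lia. Qed.

Lemma ln_pos_gt1 x : 1 < x -> 0 < ln x.
Proof. intros; rewrite <- ln_1; apply ln_increasing; lra. Qed.

Lemma m2_hit (N M : R) (x : R) :
  200000 <= ln N -> 100000 <= M -> 0.9 * ln N <= ln M -> 0 < N ->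
  M <= x <= 2 * M -> dist_int (fN N x) < 1 / (N * ln M) ->
  Rabs (ln N - (2 * ln x - ln (x - 1))) < 2 / N /\ ln x < ln N + 1.
Proof. intros HL HM Hl HN Hx Hd.
  set (L := ln N) in *. set (l := ln M) in *.
  assert (Hl10: 10 < l). lra.
  assert (Hu1: l <= ln x) by (apply ln_le'; lra).
  assert (Hu2: ln x <= 2 * l).
  { apply Rle_trans with (ln (M * M)). apply ln_le'; nra. rewrite ln_mult by lra. unfold l; lra. }
  assert (Hxm1: ln x - 1 <= ln (x - 1) <= ln x).
  { split. 2: apply ln_le'; lra.
    assert (ln x - 1 = ln (x / exp 1)). { unfold Rdiv. rewrite ln_mult, ln_Rinv, ln_exp; try lra. apply exp_pos. apply Rinv_0_lt_compat, exp_pos. }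
    rewrite H. apply ln_le'. apply Rdiv_lt_0_compat. lra. apply exp_pos.
    assert (exp 1 <= 3) by apply exp_le_3. assert (0 < exp 1) by apply exp_pos.
    apply (Rmult_le_reg_r (exp 1)); auto. unfold Rdiv. rewrite Rmult_assoc, Rinv_l by lra.
    assert (2 <= exp 1). { assert (1 + 1 <= exp 1) by apply exp_ineq1_le. lra. } nra. }
  set (u := ln x) in *.
  assert (Hu: 0 < u) by lra.
  assert (HNl: 0 < N * l) by (apply Rmult_lt_0_compat; lra).
  assert (Hd0: 1 / (N * l) <= 1 / N * (1 / 10)).
  { unfold Rdiv. rewrite !Rmult_1_l, <- Rinv_mult. apply Rinv_le_contravar. apply Rmult_lt_0_compat; lra. nra. }
  assert (HN1: 1 / N <= 1).
  { assert (N >= 1). { rewrite <- (exp_ln N) by auto. fold L. assert (1 + L <= exp L) by apply exp_ineq1_le. lra. }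
    unfold Rdiv; rewrite Rmult_1_l. rewrite <- Rinv_1. apply Rinv_le_contravar; lra. }
  assert (Hdu: 1 / (N * l) * u <= 2 / N).
  { unfold Rdiv. rewrite Rmult_1_l, Rinv_mult. replace (2 * / N) with (/ N * 2) by ring.
    rewrite Rmult_assoc. apply Rmult_le_compat_l. left; apply Rinv_0_lt_compat; lra.
    apply (Rmult_le_reg_l l). lra. rewrite <- Rmult_assoc, Rinv_r by lra. lra. }
  assert (HN2: 2 / N <= 0.001).
  { assert (N >= 1 + L). { rewrite <- (exp_ln N) by auto. fold L. assert (1 + L <= exp L) by apply exp_ineq1_le. lra. }
    unfold Rdiv. apply (Rmult_le_reg_r N). lra. rewrite Rmult_assoc, Rinv_l by lra. lra. }
  assert (Hdpos: 0 <= 1 / (N * l) * u).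
  { apply Rmult_le_pos; [|lra]. unfold Rdiv; rewrite Rmult_1_l. left; apply Rinv_0_lt_compat; auto. }
  destruct (dist_near _ _ Hd) as [m Hm].
  unfold fN in Hm. fold L in Hm. fold u in Hm.
  set (F := (L + ln (x - 1)) / u) in *.
  assert (F1: 1 + 1 / (N * l) <= F).
  { unfold F. apply (Rmult_le_reg_r u); auto. unfold Rdiv at 2. rewrite Rmult_assoc, Rinv_l by lra.
    lra. }
  assert (F3: F <= 3 - 1 / (N * l)).
  { unfold F. apply (Rmult_le_reg_r u); auto. unfold Rdiv at 1. rewrite Rmult_assoc, Rinv_l by lra.
    lra. }
  assert (Hm2: m = 2%Z).
  { apply Rabs_def2 in Hm. destruct Hm as [A B].
    assert (1 < IZR m) by lra. assert (IZR m < 3) by lra.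
    apply lt_IZR in H. apply lt_IZR in H0. lia. }
  subst m. assert (Hfin: Rabs (L - (2 * u - ln (x - 1))) < 2 / N).
  { apply Rabs_def2 in Hm. destruct Hm as [A B]. apply Rabs_def1.
    + assert (F - 2 < 1 / (N * l)) by lra.
      assert ((L + ln (x - 1)) - 2 * u < 1 / (N * l) * u).
      { unfold F in H. apply (Rmult_lt_compat_r u) in H; auto. unfold Rdiv in H. 
        replace ((L + ln (x - 1)) * / u - 2) with (((L + ln (x - 1)) - 2 * u) * / u) in H by (field; lra).
        rewrite Rmult_assoc, Rinv_l in H by lra. lra. }
      lra.
    + assert (- (1 / (N * l)) < F - 2) by lra.
      assert (- (1 / (N * l)) * u < (L + ln (x - 1)) - 2 * u).
      { unfold F in H. apply (Rmult_lt_compat_r u) in H; auto. unfold Rdiv in H. 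
        replace ((L + ln (x - 1)) * / u - 2) with (((L + ln (x - 1)) - 2 * u) * / u) in H by (field; lra).
        rewrite Rmult_assoc, Rinv_l in H by lra. lra. }
      lra. }
  split; auto. apply Rabs_def2 in Hfin. lra.
Qed.

Ltac pos := repeat (apply Rmult_lt_0_compat || apply Rinv_0_lt_compat); lra.

Lemma m2_pair (N x y : R) : 200000 <= ln N -> 0 < N -> 3 <= x -> x < y ->
  Rabs (ln N - (2 * ln x - ln (x - 1))) < 2 / N ->
  Rabs (ln N - (2 * ln y - ln (y - 1))) < 2 / N -> ln y < ln N + 1 -> y - x < 24.
Proof. intros HL HN Hx Hxy Ax Ay Hy.
  apply Rabs_def2 in Ax. apply Rabs_def2 in Ay.
  set (A := (2 * ln y - ln (y - 1)) - (2 * ln x - ln (x - 1))).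
  assert (HA: A < 4 / N) by (unfold A; lra).
  assert (E: exp (- A) = x * x * (y - 1) * / (x - 1) * / (y * y)).
  { rewrite <- (exp_ln (x * x * (y - 1) * / (x - 1) * / (y * y))).
    f_equal.
    rewrite (ln_mult _ (/ (y * y))) by pos. rewrite (ln_mult _ (/ (x - 1))) by pos.
    rewrite (ln_mult (x * x) (y - 1)) by pos. rewrite (ln_mult x x) by pos.
    rewrite !ln_Rinv by pos. rewrite (ln_mult y y) by pos. unfold A; ring.
    pos. }
  assert (H1: 1 - A <= x * x * (y - 1) * / (x - 1) * / (y * y)).
  { rewrite <- E. replace (1 - A) with (1 + - A) by ring. apply exp_ineq1_le. }
  assert (H2: (y - x) / (2 * y) <= 1 - x * x * (y - 1) * / (x - 1) * / (y * y)).
  { apply (Rmult_le_reg_r (2 * y * y * (x - 1))). nra.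
    replace ((y - x) / (2 * y) * (2 * y * y * (x - 1))) with ((y - x) * y * (x - 1)) by (field; lra).
    replace ((1 - x * x * (y - 1) * / (x - 1) * / (y * y)) * (2 * y * y * (x - 1)))
      with (2 * (y * y * (x - 1) - x * x * (y - 1))) by (field; nra).
    assert (0 <= (y - x) * (x * y - 2 * x - y)).
    { apply Rmult_le_pos. lra. nra. }
    nra. }
  assert (Hy3: y < 3 * N).
  { assert (y < exp (ln N + 1)). { rewrite <- (exp_ln y) by lra. apply exp_increasing; auto. }
    rewrite exp_plus, exp_ln in H by auto. assert (exp 1 <= 3) by apply exp_le_3. nra. }
  assert ((y - x) / (2 * y) < 4 / N) by lra.
  apply (Rmult_lt_compat_r (2 * y)) in H. 2: lra.
  replace ((y - x) / (2 * y) * (2 * y)) with (y - x) in H by (field; lra).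
  assert (4 / N * (2 * y) < 24).
  { replace (4 / N * (2 * y)) with (8 * (y / N)) by (field; lra).
    assert (y / N < 3). { apply (Rmult_lt_reg_r N); auto. unfold Rdiv; rewrite Rmult_assoc, Rinv_l; lra. }
    lra. }
  lra.
Qed.

Lemma m2_count (N M : R) (l : list Z) :
  200000 <= ln N -> 100000 <= M -> 0.9 * ln N <= ln M -> 0 < N ->
  StronglySorted Z.lt l ->
  (forall x, In x l -> M <= IZR x <= 2 * M /\ dist_int (fN N (IZR x)) < 1 / (N * ln M)) ->
  INR (length l) <= 24.
Proof. intros HL HM Hl HN Hs Hin.
  assert (Z.of_nat (length l) <= 24)%Z.
  { apply len_span; auto; [|lia]. intros i j Hi Hj.
    destruct (Nat.le_gt_cases j i).
    - destruct (Nat.eq_dec i j). subst; lia. assert (Hlt := SS_nth l Hs j i ltac:(lia) Hi). lia.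
    - assert (Hlt := SS_nth l Hs i j H Hj).
      destruct (Hin _ (nth_In l 0%Z Hi)) as [Ri Di]. destruct (Hin _ (nth_In l 0%Z Hj)) as [Rj Dj].
      destruct (m2_hit N M _ HL HM Hl HN Ri Di) as [Ai _].
      destruct (m2_hit N M _ HL HM Hl HN Rj Dj) as [Aj Bj].
      assert (IZR (nth i l 0%Z) < IZR (nth j l 0%Z)) by (apply IZR_lt; auto).
      assert (IZR (nth j l 0%Z) - IZR (nth i l 0%Z) < 24).
      { apply (m2_pair N); auto; lra. }
      rewrite <- minus_IZR in H1. apply lt_IZR in H1. lia. }
  rewrite INR_IZR_INZ. apply IZR_le in H. lra.
Qed.

Lemma trange (M t : R) : 100000 <= M -> M <= t <= 2 * M ->
  ln M <= ln t <= ln M + 1 /\ 0 <= ln (t - 1) <= ln t.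
Proof. intros HM Ht. split. split. apply ln_le'; lra.
  apply Rle_trans with (ln (2 * M)). apply ln_le'; lra. rewrite ln_mult by lra.
  assert (ln 2 <= ln (exp 1)). { apply ln_le'. lra.
    assert (1 + 1 <= exp 1) by apply exp_ineq1_le. lra. } rewrite ln_exp in H. lra.
  split. rewrite <- ln_1. apply ln_le'; lra. apply ln_le'; lra. Qed.

Lemma smoothF L : forall j t, 1 < t -> ex_derive (Derive_n (Fg L) j) t.
Proof. intros j t Ht. apply (Fg_Dk L j t Ht). Qed.

Lemma exp_big x : 0 <= x -> (1 + x / 2) ^ 2 <= exp x.
Proof. intros Hx. replace x with (x / 2 + x / 2) at 2 by field. rewrite exp_plus.
  assert (1 + x / 2 <= exp (x / 2)) by apply exp_ineq1_le. simpl. nra. Qed.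

Lemma order1_case (N M : R) (l : list Z) :
  200000 <= ln N -> 100000 <= M -> 10 <= ln M -> ln M < (9/10) * ln N -> 0 < N ->
  StronglySorted Z.lt l ->
  (forall x, In x l -> M <= IZR x <= 2 * M /\ dist_int (fN N (IZR x)) < 1 / (N * ln M)) ->
  INR (length l) <= ln N / (ln M) ^ 2 + (3/2).
Proof. intros HL HM Hl Hl9 HN Hs Hin.
  set (L := ln N) in *. set (ell := ln M) in *.
  assert (HNe: N = exp L) by (unfold L; rewrite exp_ln; auto).
  assert (HMe: M = exp ell) by (unfold ell; rewrite exp_ln; lra).
  assert (HNM: 20000 * M <= N).
  { rewrite HNe, HMe. replace L with ((L - ell) + ell) by ring. rewrite exp_plus.
    assert (1 + (L - ell) <= exp (L - ell)) by apply exp_ineq1_le.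
    assert (0 < exp ell) by apply exp_pos. nra. }
  assert (nN: N <> 0) by lra. assert (nM: M <> 0) by lra. assert (nl: ell <> 0) by lra. assert (nl1: ell + 1 <> 0) by lra.
  set (delta := 1 / (N * ell)).
  assert (Hd: 0 < delta). { unfold delta. apply Rdiv_lt_0_compat. lra. nra. }
  assert (Hc: check 1 (sgnD 1) = true) by reflexivity.
  set (lam := (9/100) * L / (2 * M * (ell + 1) ^ 2)).
  set (Lam := (L + (2001/1000) * (ell + 1)) / (M * ell ^ 2)).
  assert (Hb: forall t, M <= t <= 2 * M -> lam <= Rabs (Derive_n (fN N) 1 t) <= Lam).
  { intros t Ht. destruct (trange M t HM Ht) as [[U1 U2] [B1 B2]].
    destruct (Fk_ab L 1 t Hc ltac:(lra) ltac:(lia)) as [a [b [E1 [E2 E3]]]].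
    change (K1m (sgnD 1)) with 1%Z in E2. change (K1 (sgnD 1)) with 1%Z in E2.
    change (K01 (sgnD 1)) with 1%Z in E3. change (K02 (sgnD 1)) with 0%Z in E3.
    assert (Ea: a = 1) by lra. subst a.
    set (u := ln t) in *. set (B := L + ln (t - 1)) in *.
    assert (Hb': Rabs b <= 1.001 * u) by lra.
    assert (Hb2: - (1.001 * u) <= b <= 1.001 * u) by (split; [apply Rabs_le_between in Hb'|apply Rabs_le_between in Hb']; lra).
    assert (HD: fN N = Fg L) by reflexivity. rewrite HD.
    set (D := Rabs (Derive_n (Fg L) 1 t)) in *.
    fold ell in U1, U2. assert (Hu0: 0 < u) by lra.
    assert (Htu: M * ell ^ 2 <= t ^ 1 * u ^ 2 <= 2 * M * (ell + 1) ^ 2).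
    { rewrite pow_1. split; apply Rmult_le_compat; try nra; apply pow_incr; lra. }
    assert (HD0: 0 <= D) by apply Rabs_pos.
    assert (HB: L <= B <= L + u) by (unfold B; lra).
    assert (HBab: (9/100) * L <= Rabs (B * 1 + b) <= L + (2001/1000) * (ell + 1)).
    { rewrite Rabs_right by nra. split; nra. }
    rewrite <- E1 in HBab. split.
    - unfold lam. apply (Rmult_le_reg_r (2 * M * (ell + 1) ^ 2)). nra.
      unfold Rdiv. rewrite Rmult_assoc, Rinv_l by nra. nra.
    - unfold Lam. apply (Rmult_le_reg_r (M * ell ^ 2)). nra.
      unfold Rdiv. rewrite Rmult_assoc, Rinv_l by nra. nra. }
  assert (Hcond: INR 2 * delta < lam / INR (fact 1)).
  { assert ((ell + 1) ^ 2 <= (121/100) * ell ^ 2) by nra.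
    assert (4 * M * (ell + 1) ^ 2 <= (484/100) * M * ell * ell) by nra.
    assert ((484/100) * M * ell * ell <= (484/100) * M * ell * ((9/10) * L)) by (apply Rmult_le_compat_l; nra).
    assert (H4: (4356/1000) * M < (9/100) * N) by lra. assert (HLl: 0 < L * ell) by posR.
    assert ((484/100) * M * ell * ((9/10) * L) < (9/100) * L * N * ell).
    { replace ((484/100) * M * ell * ((9/10) * L)) with (((4356/1000) * M) * (L * ell)) by field.
      replace ((9/100) * L * N * ell) with (((9/100) * N) * (L * ell)) by field.
      apply Rmult_lt_compat_r; auto. }
    assert (key: 4 * M * (ell + 1) ^ 2 < (9/100) * L * N * ell) by lra.
    set (Q := N * ell * (2 * M * (ell + 1) ^ 2)).
    assert (HQ: 0 < Q) by (unfold Q; posR).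
    replace (INR 2 * delta) with ((4 * M * (ell + 1) ^ 2) * / Q) by (unfold delta, Q; simpl INR; field; auto).
    replace (lam / INR (fact 1)) with (((9/100) * L * N * ell) * / Q) by (unfold lam, Q; simpl fact; simpl INR; field; auto).
    apply Rmult_lt_compat_r; auto. apply Rinv_0_lt_compat; auto. }
  assert (Hmain := orderk (fN N) M delta lam Lam 1 l ltac:(lia) ltac:(lra) Hd (smoothF L) Hb Hcond Hs Hin).
  simpl fact in Hmain. simpl tri in Hmain. simpl INR in Hmain.
  rewrite Rinv_1 in Hmain. rewrite Rpower_1 in Hmain.
  2:{ apply Rplus_lt_le_0_compat. rewrite Rdiv_1_r. unfold Lam. apply Rdiv_lt_0_compat. lra. posR. lra. }
  rewrite Rdiv_1_r in Hmain.
  assert (M * (Lam + (1 + 1) * delta) <= L / ell ^ 2 + (1/2)).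
  { unfold Lam, delta. 
    replace (M * ((L + (2001/1000) * (ell + 1)) / (M * ell ^ 2) + (1 + 1) * (1 / (N * ell))))
      with (L / ell ^ 2 + ((2001/1000) * (ell + 1) / ell ^ 2 + 2 * (M / N) / ell)) by (field; auto).
    assert ((2001/1000) * (ell + 1) / ell ^ 2 <= (1/4)).
    { apply (Rmult_le_reg_r (ell ^ 2)). posR. unfold Rdiv. rewrite Rmult_assoc, Rinv_l by (apply pow_nonzero; auto). nra. }
    assert (M / N <= 1). { apply (Rmult_le_reg_r N); auto. unfold Rdiv. rewrite Rmult_assoc, Rinv_l by lra. lra. }
    assert (0 <= M / N) by (apply Rdiv_le_0_compat; lra).
    assert (2 * (M / N) / ell <= (1/4)).
    { apply (Rmult_le_reg_r ell). lra. unfold Rdiv. rewrite Rmult_assoc, Rinv_l by lra. nra. }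
    lra. }
  lra.
Qed.

Lemma pow_le_inv a b q : 0 <= a -> 0 <= b -> (1 <= q)%nat -> a ^ q <= b ^ q -> a <= b.
Proof. intros Ha Hb Hq H. destruct (Rle_lt_dec a b); auto.
  assert (b ^ q < a ^ q) by (apply pow_lt_l; auto; lra). lra. Qed.

Lemma Rpower_pow' x (q : nat) (y : R) : 0 < x -> (Rpower x y) ^ q = Rpower x (y * INR q).
Proof. intros Hx. rewrite <- Rpower_pow by apply Rpower_pos. rewrite Rpower_mult. reflexivity. Qed.

Lemma root_pow X q : (1 <= q)%nat -> 0 < X -> (Rpower X (/ INR q)) ^ q = X.
Proof. intros Hq HX. rewrite Rpower_pow' by auto. rewrite Rinv_l. apply Rpower_1; auto.
  apply not_0_INR; lia. Qed.

Lemma frac_pow M (a q : nat) : (1 <= q)%nat -> 0 < M -> (Rpower M (INR a / INR q)) ^ q = M ^ a.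
Proof. intros Hq HM. rewrite Rpower_pow' by auto.
  replace (INR a / INR q * INR q) with (INR a). apply Rpower_pow; auto.
  field. apply not_0_INR; lia. Qed.

Lemma root_ge x c q : (1 <= q)%nat -> 0 < c -> c ^ q <= x -> c <= Rpower x (/ INR q).
Proof. intros Hq Hc H. apply (pow_le_inv _ _ q); auto. lra. left; apply Rpower_pos.
  rewrite root_pow; auto. assert (0 < c ^ q) by (apply pow_lt; auto). lra. Qed.

Lemma tri_eq k : (2 * tri k = k * (k + 1))%nat.
Proof. induction k; simpl tri; lia. Qed.

Lemma small_k k : (k <= 6)%nat -> INR (fact k) <= 720 /\ 2 ^ k <= 64 /\ INR (S k) <= 7 /\ (tri k <= 21)%nat.
Proof. intros Hk. do 7 (destruct k; [simpl; repeat split; try lra; lia|]). lia. Qed.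

Lemma Mpow_exp M k : 0 < M -> M ^ k = exp (INR k * ln M).
Proof. intros HM. rewrite <- Rpower_pow by auto. reflexivity. Qed.

Lemma orderk_case (N M : R) (k : nat) (l : list Z) (kap rho C : R) :
  (2 <= k <= 6)%nat -> check k (sgnD k) = true ->
  IZR (K01 (sgnD k)) = IZR (K1m (sgnD k)) ->
  1 <= IZR (K1m (sgnD k)) ->
  0 <= IZR (K02 (sgnD k)) ->
  1001/1000 * IZR (K02 (sgnD k)) <= 49000 * IZR (K1m (sgnD k)) ->
  2 * IZR (K1 (sgnD k)) + 1001/1000 * (IZR (K01 (sgnD k)) + IZR (K02 (sgnD k))) <= kap ->
  kap / INR (fact k) + 1 <= 100 * rho ^ tri k ->
  0 < rho ->
  INR k * rho + INR k / 69 <= C -> 1 <= kap ->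
  200000 <= ln N -> 100000 <= M -> 10 <= ln M -> INR k * ln M <= ln N / 2 -> 0 < N ->
  StronglySorted Z.lt l ->
  (forall x, In x l -> M <= IZR x <= 2 * M /\ dist_int (fN N (IZR x)) < 1 / (N * ln M)) ->
  INR (length l) <= C * (Rpower (ln N) (/ INR (tri k)) * Rpower M (INR (tri k - k) / INR (tri k))).
Proof.
  intros Hk Hc E01 H1m H02 H02' Hkap Hrho Hrho0 HC Hkap1 HL HM Hl Hkl HN Hs Hin.
  destruct (small_k k ltac:(lia)) as [Sf [S2 [S1 S3]]].
  set (L := ln N) in *. set (ell := ln M) in *.
  set (a1m := IZR (K1m (sgnD k))) in *. set (a1 := IZR (K1 (sgnD k))) in *.
  set (a01 := IZR (K01 (sgnD k))) in *. set (a02 := IZR (K02 (sgnD k))) in *.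
  assert (HNe: N = exp L) by (unfold L; rewrite exp_ln; auto).
  assert (HM0: 0 < M) by lra.
  assert (Hk1: 2 <= INR k) by (replace 2 with (INR 2) by (simpl; lra); apply le_INR; lia).
  assert (Hell4: ell <= L / 4) by nra.
  set (Mk := M ^ k).
  assert (HMk: Mk <= exp (L / 2)).
  { unfold Mk. rewrite Mpow_exp by auto. fold ell. destruct (Rle_lt_or_eq_dec _ _ Hkl).
    left; apply exp_increasing; auto. rewrite e; lra. }
  assert (HMk0: 0 < Mk) by (unfold Mk; apply pow_lt; lra).
  assert (Hexp: 1000000000 <= exp (L / 2)).
  { assert (H := exp_big (L / 2) ltac:(lra)). nra. }
  assert (HNsq: N = exp (L / 2) * exp (L / 2)) by (rewrite HNe, <- exp_plus; f_equal; field).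
  assert (nN: N <> 0) by lra. assert (nl: ell <> 0) by lra. assert (nMk: Mk <> 0) by lra.
  assert (Hfk: 0 < INR (fact k)) by (apply lt_0_INR; apply lt_O_fact).
  assert (nfk: INR (fact k) <> 0) by lra.
  set (delta := 1 / (N * ell)).
  assert (Hd: 0 < delta) by (unfold delta; apply Rdiv_lt_0_compat; [lra|posR]).
  set (lam := a1m * L / (2 * (2 ^ k * Mk) * (ell + 1) ^ 2)).
  set (Lam := kap * L / (Mk * ell ^ 2)).
  assert (Hb: forall t, M <= t <= 2 * M -> lam <= Rabs (Derive_n (fN N) k t) <= Lam).
  { intros t Ht. destruct (trange M t HM Ht) as [[U1 U2] [B1 B2]]. fold ell in U1, U2.
    destruct (Fk_ab L k t Hc ltac:(lra) ltac:(lia)) as [a [b [E1 [E2 E3]]]].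
    fold a1m a1 a01 a02 in E2, E3.
    assert (HD: fN N = Fg L) by reflexivity. rewrite HD.
    set (u := ln t) in *. set (B := L + ln (t - 1)) in *.
    set (D := Rabs (Derive_n (Fg L) k t)) in *.
    assert (HB: L <= B <= L + u) by (unfold B; lra).
    assert (Hb2: - (1001/1000 * (a01 * u + a02)) <= b <= 1001/1000 * (a01 * u + a02))
      by (apply Rabs_le_between in E3; lra).
    assert (HD0: 0 <= D) by apply Rabs_pos.
    assert (Ha0: 1 <= a) by lra.
    assert (HL1: 1 <= L) by lra.
    assert (Ba0: 0 <= B * a) by (apply Rmult_le_pos; lra).
    assert (Hup: Rabs (B * a + b) <= kap * L).
    { assert (HBa: B * a <= (2 * L) * a1). { apply Rmult_le_compat; lra. }
      assert (Hb3a: a01 * u <= a01 * L) by (apply Rmult_le_compat_l; lra).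
      assert (Hb3b: a02 <= a02 * L) by (rewrite <- (Rmult_1_r a02) at 1; apply Rmult_le_compat_l; lra).
      assert (HkL: (2 * a1 + 1001/1000 * (a01 + a02)) * L <= kap * L) by (apply Rmult_le_compat_r; lra).
      apply Rabs_le. split; lra. }
    assert (Hlo: a1m * L / 2 <= Rabs (B * a + b)).
    { assert (HBa: L * a1m <= B * a) by (apply Rmult_le_compat; lra).
      assert (Hb3: a01 * u <= a1m * (L / 4 + 1)) by (rewrite E01; apply Rmult_le_compat_l; lra).
      assert (Hq: a1m * (1001/1000 + 49000) <= a1m * (L * (1/2 - 1001/4000))) by (apply Rmult_le_compat_l; lra).
      assert (0 <= B * a + b) by lra. rewrite Rabs_right by lra. lra. }
    rewrite <- E1 in Hup, Hlo.
    assert (Htk: Mk <= t ^ k <= 2 ^ k * Mk).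
    { unfold Mk. rewrite <- Rpow_mult_distr. split; apply pow_incr; lra. }
    assert (Hu2: ell ^ 2 <= u ^ 2 <= (ell + 1) ^ 2) by (split; apply pow_incr; lra).
    assert (Hell2: 0 < ell ^ 2) by posR.
    assert (P1: Mk * ell ^ 2 <= t ^ k * u ^ 2) by (apply Rmult_le_compat; lra).
    assert (P2: t ^ k * u ^ 2 <= (2 ^ k * Mk) * (ell + 1) ^ 2).
    { apply Rmult_le_compat; try lra; try apply pow2_ge_0; apply pow_le; lra. }
    split.
    - unfold lam. apply (Rmult_le_reg_r (2 * (2 ^ k * Mk) * (ell + 1) ^ 2)). posR.
      unfold Rdiv. rewrite Rmult_assoc, Rinv_l. 2: apply Rgt_not_eq; posR.
      assert (D * (t ^ k * u ^ 2) <= D * ((2 ^ k * Mk) * (ell + 1) ^ 2)) by (apply Rmult_le_compat_l; lra).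
      unfold Rdiv in Hlo. lra.
    - unfold Lam. apply (Rmult_le_reg_r (Mk * ell ^ 2)). posR.
      unfold Rdiv. rewrite Rmult_assoc, Rinv_l. 2: apply Rgt_not_eq; posR.
      assert (D * (Mk * ell ^ 2) <= D * (t ^ k * u ^ 2)) by (apply Rmult_le_compat_l; lra).
      lra. }
  assert (Hcond: INR (S k) * delta < lam / INR (fact k)).
  { set (Q := 2 * (2 ^ k * Mk) * (ell + 1) ^ 2 * INR (fact k)).
    assert (HQ: 0 < Q) by (unfold Q; posR).
    assert (HSk: 0 < INR (S k)) by (apply lt_0_INR; lia).
    assert (A1: 2 ^ k * Mk <= 64 * Mk) by (apply Rmult_le_compat_r; lra).
    assert (A2: (ell + 1) ^ 2 <= (121/100) * (ell * L)).
    { assert ((ell + 1) ^ 2 <= (121/100) * (ell * ell)) by nra.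
      assert (ell * ell <= ell * L) by (apply Rmult_le_compat_l; lra). lra. }
    assert (A3: Q <= 2 * (64 * Mk) * ((121/100) * (ell * L)) * 720).
    { unfold Q.
      assert (B2: (2 * (2 ^ k * Mk)) * (ell + 1) ^ 2 <= (2 * (64 * Mk)) * ((121/100) * (ell * L))).
      { apply Rmult_le_compat. left; posR. apply pow2_ge_0. lra. lra. }
      apply Rmult_le_compat. left; posR. lra. exact B2. exact Sf. }
    assert (A4: INR (S k) * Q <= 7 * (2 * (64 * Mk) * ((121/100) * (ell * L)) * 720)).
    { apply Rmult_le_compat; lra. }
    assert (A5: L * ell * (Mk * 1000000000) <= a1m * L * N * ell).
    { rewrite HNsq. assert (Mk * 1000000000 <= exp (L / 2) * exp (L / 2)) by nra.
      assert (0 < L * ell) by posR.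
      assert (L * ell * (Mk * 1000000000) <= L * ell * (exp (L / 2) * exp (L / 2))) by (apply Rmult_le_compat_l; lra).
      assert (0 <= L * ell * (exp (L / 2) * exp (L / 2))) by (apply Rmult_le_pos; [lra| apply Rmult_le_pos; left; apply exp_pos]).
      assert (L * ell * (exp (L / 2) * exp (L / 2)) <= a1m * (L * ell * (exp (L / 2) * exp (L / 2)))).
      { rewrite <- (Rmult_1_l (L * ell * _)) at 1. apply Rmult_le_compat_r; lra. }
      lra. }
    assert (A6: 7 * (2 * (64 * Mk) * ((121/100) * (ell * L)) * 720) < L * ell * (Mk * 1000000000)).
    { assert (0 < Mk * (ell * L)) by posR. nra. }
    replace (INR (S k) * delta) with ((INR (S k) * Q) * / (N * ell * Q)) by (unfold delta; field; repeat split; lra).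
    replace (lam / INR (fact k)) with ((a1m * L * N * ell) * / (N * ell * Q)) by (unfold lam, Q; field; repeat split; try lra; apply Rgt_not_eq; posR).
    apply Rmult_lt_compat_r. apply Rinv_0_lt_compat; posR. lra. }
  assert (Hmain := orderk (fN N) M delta lam Lam k l ltac:(lia) ltac:(lra) Hd (smoothF L) Hb Hcond Hs Hin).
  set (X := Lam / INR (fact k) + INR (S k) * delta) in *.
  set (q := tri k) in *.
  assert (Hq2: (2 * q = k * (k + 1))%nat) by (unfold q; apply tri_eq).
  assert (Hqk: (k <= q)%nat) by nia.
  assert (Hq1: (1 <= q)%nat) by nia.
  assert (Hell2: 0 < ell ^ 2) by posR.
  assert (HSk: INR (S k) <= 7) by auto.
  assert (HX0: 0 < X).
  { unfold X, Lam. apply Rplus_lt_le_0_compat. apply Rdiv_lt_0_compat; [|lra]. apply Rdiv_lt_0_compat; posR.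
    apply Rmult_le_pos; [apply pos_INR|lra]. }
  assert (HX1: X <= (kap / INR (fact k) + 1) * L / (Mk * ell ^ 2)).
  { unfold X, Lam.
    assert (INR (S k) * delta <= L / (Mk * ell ^ 2)).
    { unfold delta. replace (INR (S k) * (1 / (N * ell))) with ((INR (S k) * Mk * ell) * / (N * Mk * ell ^ 2)) by (field; auto).
      replace (L / (Mk * ell ^ 2)) with ((L * N) * / (N * Mk * ell ^ 2)) by (field; auto).
      apply Rmult_le_compat_r. left; apply Rinv_0_lt_compat; posR.
      assert (INR (S k) * Mk * ell <= 7 * exp (L / 2) * L).
      { apply Rmult_le_compat. apply Rmult_le_pos; [apply pos_INR|lra]. lra. apply Rmult_le_compat; try lra. apply pos_INR. lra. }
      rewrite HNsq. assert (0 < L) by lra.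
      assert (7 * exp (L / 2) * L <= L * (exp (L / 2) * exp (L / 2))).
      { replace (7 * exp (L / 2) * L) with (L * (7 * exp (L / 2))) by ring. apply Rmult_le_compat_l. lra.
        apply Rmult_le_compat_r. left; apply exp_pos. lra. }
      lra. }
    replace ((kap / INR (fact k) + 1) * L / (Mk * ell ^ 2)) with (kap * L / (Mk * ell ^ 2) / INR (fact k) + L / (Mk * ell ^ 2)) by (field; auto).
    lra. }
  set (Y := Rpower L (/ INR q) * Rpower M (INR (q - k) / INR q)).
  assert (HY0: 0 < Y) by (unfold Y; apply Rmult_lt_0_compat; apply Rpower_pos).
  assert (Key: M * Rpower X (/ INR q) <= rho * Y).
  { apply (pow_le_inv _ _ q). apply Rmult_le_pos. lra. left; apply Rpower_pos. apply Rmult_le_pos; lra. auto.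
    rewrite !Rpow_mult_distr. unfold Y. rewrite Rpow_mult_distr.
    rewrite !root_pow by first [lia|lra]. rewrite frac_pow by first [lia|lra].
    assert (EMq: M ^ q = Mk * M ^ (q - k)) by (unfold Mk; rewrite <- pow_add; f_equal; lia).
    rewrite EMq.
    assert (HMq: 0 < M ^ (q - k)) by posR.
    set (c := kap / INR (fact k) + 1) in *.
    assert (Mk * M ^ (q - k) * X <= Mk * M ^ (q - k) * (c * L / (Mk * ell ^ 2))).
    { apply Rmult_le_compat_l; auto. left; posR. }
    replace (Mk * M ^ (q - k) * (c * L / (Mk * ell ^ 2))) with (c * (L * M ^ (q - k)) / ell ^ 2) in H by (field; auto).
    assert (c * (L * M ^ (q - k)) / ell ^ 2 <= c / 100 * (L * M ^ (q - k))).
    { assert (Hc0: 0 <= c). { unfold c. apply Rplus_le_le_0_compat; [|lra]. apply Rdiv_le_0_compat; lra. }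
      assert (P: 0 <= c * (L * M ^ (q - k))) by (apply Rmult_le_pos; [auto| left; posR]).
      assert (ell ^ 2 >= 100) by nra.
      assert (/ ell ^ 2 <= / 100) by (apply Rinv_le_contravar; lra).
      replace (c / 100 * (L * M ^ (q - k))) with (c * (L * M ^ (q - k)) * / 100) by field.
      unfold Rdiv. apply Rmult_le_compat_l; auto. }
    assert (c / 100 * (L * M ^ (q - k)) <= rho ^ q * (L * M ^ (q - k))).
    { apply Rmult_le_compat_r. left; posR. lra. }
    lra. }
  assert (HY69: 69 <= Y).
  { assert (A: 3/2 <= Rpower L (/ INR q)).
    { apply root_ge; auto. lra. apply Rle_trans with ((3/2) ^ 21). apply Rle_pow. lra. auto.
      simpl; lra. }
    assert (B: 46 <= Rpower M (INR (q - k) / INR q)).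
    { apply Rle_trans with (Rpower M (/ INR 3)).
      apply root_ge. lia. lra. simpl. lra.
      apply Rle_Rpower. lra. assert (0 < INR q) by (apply lt_0_INR; lia).
      apply (Rmult_le_reg_r (INR q)); auto. unfold Rdiv. rewrite Rmult_assoc, Rinv_l by lra.
      rewrite Rmult_1_r. rewrite <- (Rmult_1_l (INR q)) at 1. replace (/ INR 3) with (/ 3) by (simpl; field).
      assert (3 * INR (q - k) >= INR q).
      { replace 3 with (INR 3) by (simpl; lra). rewrite <- mult_INR. apply Rle_ge, le_INR. nia. }
      lra. }
    unfold Y. assert (0 <= 3/2) by lra. nra. }
  assert (HkY: INR k <= INR k / 69 * Y).
  { unfold Rdiv. rewrite Rmult_assoc. rewrite <- (Rmult_1_r (INR k)) at 1. apply Rmult_le_compat_l. apply pos_INR.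
    apply (Rmult_le_reg_l 69). lra. rewrite <- Rmult_assoc, Rinv_r by lra. lra. }
  assert (INR k * (M * Rpower X (/ INR q)) <= INR k * (rho * Y)) by (apply Rmult_le_compat_l; [apply pos_INR|auto]).
  assert ((INR k * rho + INR k / 69) * Y <= C * Y) by (apply Rmult_le_compat_r; lra).
  fold Y. lra.
Qed.

Lemma expo_eq k : (1 <= k)%nat -> 2 / INR (k * k + k) = / INR (tri k) /\
  1 - 2 / INR (k + 1) = INR (tri k - k) / INR (tri k).
Proof. intros Hk. assert (H := tri_eq k).
  assert (E: INR (k * k + k) = 2 * INR (tri k)).
  { replace (k * k + k)%nat with (2 * tri k)%nat by nia. rewrite mult_INR. simpl; ring. }
  assert (Hq: (k <= tri k)%nat) by nia.
  assert (Hq0: 0 < INR (tri k)) by (apply lt_0_INR; nia).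
  rewrite E. split. field. lra.
  rewrite minus_INR by auto. rewrite plus_INR. simpl INR at 2.
  assert (E2: INR k * (INR k + 1) = 2 * INR (tri k)).
  { rewrite <- E. rewrite plus_INR, mult_INR. ring. }
  assert (0 < INR k) by (apply lt_0_INR; lia).
  assert (EQ: INR (tri k) = INR k * (INR k + 1) / 2) by lra.
  rewrite EQ. field. lra. Qed.

Lemma Yge k L M : (2 <= k <= 6)%nat -> 200000 <= L -> 100000 <= M ->
  69 <= Rpower L (/ INR (tri k)) * Rpower M (INR (tri k - k) / INR (tri k)).
Proof. intros Hk HL HM. destruct (small_k k ltac:(lia)) as [_ [_ [_ S3]]].
  set (q := tri k) in *.
  assert (Hq2: (2 * q = k * (k + 1))%nat) by (unfold q; apply tri_eq).
  assert (Hq1: (1 <= q)%nat) by nia.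
  assert (A: 3/2 <= Rpower L (/ INR q)).
  { apply root_ge; auto. lra. apply Rle_trans with ((3/2) ^ 21). apply Rle_pow. lra. auto.
    simpl; lra. }
  assert (B: 46 <= Rpower M (INR (q - k) / INR q)).
  { apply Rle_trans with (Rpower M (/ INR 3)).
    apply root_ge. lia. lra. simpl. lra.
    apply Rle_Rpower. lra. assert (0 < INR q) by (apply lt_0_INR; lia).
    apply (Rmult_le_reg_r (INR q)); auto. unfold Rdiv. rewrite Rmult_assoc, Rinv_l by lra.
    rewrite Rmult_1_r. rewrite <- (Rmult_1_l (INR q)) at 1. replace (/ INR 3) with (/ 3) by (simpl; field).
    assert (3 * INR (q - k) >= INR q).
    { replace 3 with (INR 3) by (simpl; lra). rewrite <- mult_INR. apply Rle_ge, le_INR. nia. }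
    lra. }
  assert (0 <= 3/2) by lra. nra. Qed.

Lemma main_k (N M : R) (k : nat) (l : list Z) (kap rho : R) :
  (2 <= k <= 6)%nat -> check k (sgnD k) = true ->
  IZR (K01 (sgnD k)) = IZR (K1m (sgnD k)) ->
  1 <= IZR (K1m (sgnD k)) ->
  0 <= IZR (K02 (sgnD k)) ->
  1001/1000 * IZR (K02 (sgnD k)) <= 49000 * IZR (K1m (sgnD k)) ->
  2 * IZR (K1 (sgnD k)) + 1001/1000 * (IZR (K01 (sgnD k)) + IZR (K02 (sgnD k))) <= kap ->
  kap / INR (fact k) + 1 <= 100 * rho ^ tri k ->
  0 < rho ->
  INR k * rho + INR k / 69 <= Ck k -> 1 <= kap -> 24 <= Ck k * 69 ->
  200000 <= ln N -> 100000 <= M -> 10 <= ln M -> 0 < N ->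
  StronglySorted Z.lt l ->
  (forall x, In x l -> M <= IZR x <= 2 * M /\ dist_int (fN N (IZR x)) < 1 / (N * ln M)) ->
  INR (length l) <= Ck k * Rpower (ln N) (2 / INR (k * k + k)) * Rpower M (1 - 2 / INR (k + 1)).
Proof.
  intros Hk Hc E01 H1m H02 H02' Hkap Hrho Hrho0 HC Hkap1 HC2 HL HM Hl HN Hs Hin.
  destruct (expo_eq k ltac:(lia)) as [X1 X2]. rewrite X1, X2, Rmult_assoc.
  assert (HY := Yge k (ln N) M Hk HL HM).
  set (Y := Rpower (ln N) (/ INR (tri k)) * Rpower M (INR (tri k - k) / INR (tri k))) in *.
  assert (HCY: 24 <= Ck k * Y).
  { assert (0 < Ck k) by lra. assert (Ck k * 69 <= Ck k * Y) by (apply Rmult_le_compat_l; lra). lra. }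
  destruct (Rle_lt_dec (9/10 * ln N) (ln M)).
  - assert (H := m2_count N M l HL HM ltac:(lra) HN Hs Hin). lra.
  - assert (H := order1_case N M l HL HM Hl r HN Hs Hin).
    destruct (Rle_lt_dec (INR k * ln M) (ln N / 2)).
    + apply (orderk_case N M k l kap rho (Ck k)); auto.
    + assert (Hk2: INR k <= 6) by (replace 6 with (INR 6) by (simpl; lra); apply le_INR; lia).
      assert (ln N < 12 * ln M) by nra.
      assert (ln N / (ln M) ^ 2 <= 2).
      { apply (Rmult_le_reg_r (ln M ^ 2)). nra. unfold Rdiv. rewrite Rmult_assoc, Rinv_l. 2: apply pow_nonzero; lra. nra. }
      lra.
Qed.

Lemma Kv2 : K1m (sgnD 2) = 1%Z /\ K1 (sgnD 2) = 3%Z /\ K01 (sgnD 2) = 1%Z /\ K02 (sgnD 2) = 2%Z /\ check 2 (sgnD 2) = true.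
Proof. vm_compute. repeat split. Qed.
Lemma Kv3 : K1m (sgnD 3) = 2%Z /\ K1 (sgnD 3) = 14%Z /\ K01 (sgnD 3) = 2%Z /\ K02 (sgnD 3) = 12%Z /\ check 3 (sgnD 3) = true.
Proof. vm_compute. repeat split. Qed.
Lemma Kv4 : K1m (sgnD 4) = 6%Z /\ K1 (sgnD 4) = 88%Z /\ K01 (sgnD 4) = 6%Z /\ K02 (sgnD 4) = 82%Z /\ check 4 (sgnD 4) = true.
Proof. vm_compute. repeat split. Qed.
Lemma Kv5 : K1m (sgnD 5) = 24%Z /\ K1 (sgnD 5) = 694%Z /\ K01 (sgnD 5) = 24%Z /\ K02 (sgnD 5) = 670%Z /\ check 5 (sgnD 5) = true.
Proof. vm_compute. repeat split. Qed.
Lemma Kv6 : K1m (sgnD 6) = 120%Z /\ K1 (sgnD 6) = 6578%Z /\ K01 (sgnD 6) = 120%Z /\ K02 (sgnD 6) = 6458%Z /\ check 6 (sgnD 6) = true.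
Proof. vm_compute. repeat split. Qed.

Ltac solve_k Kv k kap rho N M l HL HM Hl HN Hs Hin :=
  destruct Kv as [e1 [e2 [e3 [e4 e5]]]];
  apply (main_k N M k l kap rho); auto; try lia;
  rewrite ?e1, ?e2, ?e3, ?e4; unfold Ck; simpl; lra.

Theorem lemma3p3 (N M : R) (k : nat) :
  powerRZ 10 100000 <= N ->
  10 ^ 5 <= M ->
  (1 <= k <= 6)%nat ->
  INR (Rcount (fN N) M (1 / (N * ln M)))
    <= Ck k * Rpower (ln N) (2 / INR (k * k + k))
            * Rpower M (1 - 2 / INR (k + 1)).
Proof.
  intros HN0 HM0 Hk.
  assert (Hln10: 2 <= ln 10).
  { assert (exp 2 <= 10). { replace 2 with (1 + 1) by ring. rewrite exp_plus.
      assert (exp 1 <= 3) by apply exp_le_3. assert (0 < exp 1) by apply exp_pos. nra. }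
    rewrite <- (ln_exp 2). apply ln_le'. apply exp_pos. auto. }
  assert (HP: powerRZ 10 100000 = Rpower 10 100000) by (apply powerRZ_Rpower; lra).
  rewrite HP in HN0.
  assert (HN: 0 < N) by (assert (0 < Rpower 10 100000) by apply Rpower_pos; lra).
  assert (HL: 200000 <= ln N).
  { apply Rle_trans with (ln (Rpower 10 100000)). rewrite ln_Rpower. nra.
    apply ln_le'. apply Rpower_pos. auto. }
  assert (HM: 100000 <= M) by (simpl in HM0; lra).
  assert (Hl: 10 <= ln M).
  { apply Rle_trans with (ln (10 ^ 5)). rewrite ln_pow by lra. simpl INR. lra.
    apply ln_le'. simpl; lra. auto. }
  rewrite Rcount_eq.
  set (l := filter (hitP (fN N) M (1 / (N * ln M))) (Zrange (up M - 1) (up (2 * M)))).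
  assert (Hs: StronglySorted Z.lt l) by (apply SS_filter, Zrange_sorted).
  assert (Hin: forall x, In x l -> M <= IZR x <= 2 * M /\ dist_int (fN N (IZR x)) < 1 / (N * ln M)).
  { intros x Hx. apply filter_In in Hx. apply hit_props. tauto. }
  clearbody l.
  destruct k as [|[|[|[|[|[|[|k]]]]]]]; try lia.
  -
    simpl INR. replace (2 / (1 + 1)) with 1 by field. replace (1 - 1) with 0 by ring.
    rewrite Rpower_1 by lra. rewrite Rpower_O by lra. change (Ck 1) with (3022 / 100000).
    destruct (Rle_lt_dec (9/10 * ln N) (ln M)).
    + assert (H := m2_count N M l HL HM ltac:(lra) HN Hs Hin). lra.
    + assert (H := order1_case N M l HL HM Hl r HN Hs Hin).
      assert (ln N / ln M ^ 2 <= ln N / 100).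
      { unfold Rdiv. apply Rmult_le_compat_l. lra. apply Rinv_le_contravar. lra. nra. }
      lra.
  - solve_k Kv2 2%nat 10 (45/100) N M l HL HM Hl HN Hs Hin.
  - solve_k Kv3 3%nat 43 1 N M l HL HM Hl HN Hs Hin.
  - solve_k Kv4 4%nat 265 1 N M l HL HM Hl HN Hs Hin.
  - solve_k Kv5 5%nat 2083 1 N M l HL HM Hl HN Hs Hin.
  - solve_k Kv6 6%nat 19741 1 N M l HL HM Hl HN Hs Hin.
Qed.
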